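(* Let $f\in\mathcal{C}(2\pi)$ with modulus of continuity $\omega_f$. Then for every integer $n\ge2$, $$E^\alpha_{nn}(f;[-\pi,\pi])\le\frac{1+|\alpha|_\infty(\|Id-L\|-1)}{1-|\alpha|_\infty}\,2\,\omega_f\Big(\frac{2\pi\sqrt3}{n+2}\Big)+\frac{|\alpha|_\infty}{1-|\alpha|_\infty}\|Id-L\|\,\|f\|_\infty.$$
   Context: Let $I=[x_0,x_N]=[-\pi,\pi]$, $N\ge2$, $\Delta=\{x_0<x_1<\dots<x_N\}$, $I_i=[x_{i-1},x_i]$, and $L_i(x)=a_ix+b_i$ the affine map of $I$ onto $I_i$ with $L_i(x_0)=x_{i-1}$, $L_i(x_N)=x_i$; $\alpha\in(-1,1)^N$, $|\alpha|_\infty=\max_i|\alpha_i|$. For $f,b$ continuous with $b(x_0)=f(x_0)$, $b(x_N)=f(x_N)$, $f^\alpha_{\Delta,b}$ is the unique continuous $g$ with $g(x)=f(x)+\alpha_i(g-b)(L_i^{-1}(x))$ for $x\in I_i$. $L:\mathcal{C}(2\pi)\to\mathcal{C}(2\pi)$ is bounded linear with $(Lf)(x_0)=f(x_0)$, $(Lf)(x_N)=f(x_N)$, and $\mathcal{F}^\alpha_{\Delta,L}(f)=f^\alpha_{\Delta,Lf}$. $\mathcal{C}(2\pi)=\{f\in\mathcal{C}([-\pi,\pi]):f(-\pi)=f(\pi)\}$ with sup norm; $\mathfrak{T}_m$ = real trigonometric polynomials of degree $\le m$; $\mathfrak{R}_{mn}(2\pi)=\{p/q:p\in\mathfrak{T}_m,q\in\mathfrak{T}_n,q>0\text{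 on }[-\pi,\pi]\}$; $\mathfrak{R}^\alpha_{mn}(2\pi)=\mathcal{F}^\alpha_{\Delta,L}(\mathfrak{R}_{mn}(2\pi))$; $E^\alpha_{mn}(f;[-\pi,\pi])=\inf\{\|f-r^\alpha\|_\infty:r^\alpha\in\mathfrak{R}^\alpha_{mn}(2\pi)\}$. The modulus of continuity is $\omega_f(\delta)=\sup\{|f(x)-f(y)|:x,y\in[-\pi,\pi],|x-y|\le\delta\}$. *)

(* Defs.v *)
From Stdlib Require Import Reals Lra Lia Classical ClassicalEpsilon.
Open Scope R_scope.

(** Supremum of a set of reals (0 if the set has no least upper bound). *)
Definition sup_R (E : R -> Prop) : R :=
  match excluded_middle_informative (exists l, is_lub E l) with
  | left H => proj1_sig (constructive_indefinite_description _ H)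
  | right _ => 0
  end.

Definition inf_R (E : R -> Prop) : R := - sup_R (fun y => E (- y)).

Definition Ipi (t : R) : Prop := - PI <= t <= PI.

Definition cont_on (a b : R) (g : R -> R) : Prop :=
  forall t, a <= t <= b -> forall eps, 0 < eps ->
    exists delta, 0 < delta /\
      forall s, a <= s <= b -> Rabs (s - t) < delta -> Rabs (g s - g t) < eps.

Definition C2pi (g : R -> R) : Prop := cont_on (- PI) PI g /\ g (- PI) = g PI.

Definition supnorm (g : R -> R) : R :=
  sup_R (fun y => exists t, Ipi t /\ y = Rabs (g t)).

Definition modcont (g : R -> R) (d : R) : R :=
  sup_R (fun y => exists s t, Ipi s /\ Ipi t /\ Rabs (s - t) <= d /\
                              y = Rabs (g s - g t)).

Definition trig_poly (m : nat) (p : R -> R) : Prop :=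
  exists a b : nat -> R, forall t,
    p t = sum_f_R0 (fun k => a k * cos (INR k * t) + b k * sin (INR k * t)) m.

Definition trig_rat (m n : nat) (r : R -> R) : Prop :=
  exists p q, trig_poly m p /\ trig_poly n q /\
    (forall t, Ipi t -> 0 < q t) /\ (forall t, r t = p t / q t).

Definition partition (N : nat) (x : nat -> R) : Prop :=
  (2 <= N)%nat /\ x 0%nat = - PI /\ x N = PI /\
  (forall i, (i < N)%nat -> x i < x (S i)).

(** Inverse of the affine map L_i of [x_0,x_N] onto [x_{i-1},x_i]
    with L_i(x_0)=x_{i-1}, L_i(x_N)=x_i. *)
Definition Linv (N : nat) (x : nat -> R) (i : nat) (y : R) : R :=
  x 0%nat + (x N - x 0%nat) * (y - x (i - 1)%nat) / (x i - x (i - 1)%nat).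

Fixpoint alpha_norm (alpha : nat -> R) (n : nat) : R :=
  match n with
  | O => 0
  | S k => Rmax (Rabs (alpha (S k))) (alpha_norm alpha k)
  end.

Definition is_FIF (N : nat) (x : nat -> R) (alpha : nat -> R)
  (f b g : R -> R) : Prop :=
  cont_on (- PI) PI g /\
  forall i, (1 <= i <= N)%nat -> forall t, x (i - 1)%nat <= t <= x i ->
    g t = f t + alpha i * (g (Linv N x i t) - b (Linv N x i t)).

(** Hypotheses on L : C(2pi) -> C(2pi) bounded linear, interpolating at the
    endpoints.  Functions are represented by R -> R, only values on [-pi,pi]
    matter. *)
Definition admissible_L (N : nat) (x : nat -> R) (L : (R -> R) -> (R -> R)) : Prop :=
  (forall g, C2pi g -> C2pi (L g)) /\
  (forall g h, C2pi g -> C2pi h -> (forall t, Ipi t -> g t = h t) ->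
     forall t, Ipi t -> L g t = L h t) /\
  (forall g h c d, C2pi g -> C2pi h ->
     forall t, Ipi t ->
       L (fun s => c * g s + d * h s) t = c * L g t + d * L h t) /\
  (exists M, forall g, C2pi g -> supnorm (L g) <= M * supnorm g) /\
  (forall g, C2pi g -> L g (x 0%nat) = g (x 0%nat) /\ L g (x N) = g (x N)).

Definition norm_IdmL (L : (R -> R) -> (R -> R)) : R :=
  sup_R (fun y => exists g, C2pi g /\ supnorm g <= 1 /\
                            y = supnorm (fun t => g t - L g t)).

Definition E_alpha (N : nat) (x : nat -> R) (alpha : nat -> R)
  (L : (R -> R) -> (R -> R)) (m n : nat) (f : R -> R) : R :=
  inf_R (fun y => exists r g, trig_rat m n r /\ is_FIF N x alpha r (L r) g /\
                              y = supnorm (fun t => f t - g t)).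

(* Main.v *)
Require Import Defs.
From Stdlib Require Import Reals Lra Lia ZArith Classical ClassicalEpsilon.
Open Scope R_scope.

Lemma sup_R_lub E : (exists y, E y) -> (exists B, forall y, E y -> y <= B) ->
  is_lub E (sup_R E).
Proof.
  intros Hne [B HB].
  assert (Hex : exists l, is_lub E l).
  { destruct (completeness E) as [l Hl]; [exists B; intros z Hz; apply HB; auto|auto|].
    exists l; auto. }
  unfold sup_R. destruct (excluded_middle_informative _) as [H|H]; [|contradiction].
  destruct (constructive_indefinite_description _ H) as [l Hl]; simpl; auto.
Qed.

Lemma sup_R_ub E y : E y -> (exists B, forall y, E y -> y <= B) -> y <= sup_R E.
Proof.
  intros Hy HB. destruct (sup_R_lub E (ex_intro _ y Hy) HB) as [H1 H2]. apply H1; auto.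
Qed.

Lemma sup_R_le E B : (exists y, E y) -> (forall y, E y -> y <= B) -> sup_R E <= B.
Proof.
  intros Hne HB. destruct (sup_R_lub E Hne (ex_intro _ B HB)) as [H1 H2]. apply H2.
  intros z Hz; apply HB; auto.
Qed.

Lemma sup_R_ge_elem E y : E y -> 0 <= y -> 0 <= sup_R E.
Proof.
  intros Hy H0. unfold sup_R. destruct (excluded_middle_informative _) as [H|H]; [|lra].
  destruct (constructive_indefinite_description _ H) as [l Hl]; simpl.
  destruct Hl as [Hl _]. apply Rle_trans with y; auto.
Qed.

Lemma PI_pos : 0 < PI. Proof. exact PI_RGT_0. Qed.

Lemma Ipi0 : Ipi 0. Proof. unfold Ipi; pose proof PI_pos; lra. Qed.

Definition bnd (g : R -> R) : Prop := exists B, forall t, Ipi t -> Rabs (g t) <= B.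

Lemma supnorm_nonneg g : 0 <= supnorm g.
Proof.
  unfold supnorm. apply sup_R_ge_elem with (Rabs (g 0)).
  - exists 0; split; auto; apply Ipi0.
  - apply Rabs_pos.
Qed.

Lemma supnorm_ge g t : bnd g -> Ipi t -> Rabs (g t) <= supnorm g.
Proof.
  intros [B HB] Ht. unfold supnorm. apply sup_R_ub. { exists t; auto. }
  exists B. intros y [s [Hs ->]]. auto.
Qed.

Lemma supnorm_le g B : (forall t, Ipi t -> Rabs (g t) <= B) -> supnorm g <= B.
Proof.
  intros HB. unfold supnorm. apply sup_R_le.
  - exists (Rabs (g 0)), 0; split; auto; apply Ipi0.
  - intros y [s [Hs ->]]. auto.
Qed.

Definition clamp (t : R) : R := Rmax (- PI) (Rmin PI t).

Lemma clamp_Ipi t : Ipi (clamp t).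
Proof.
  unfold clamp, Ipi, Rmax, Rmin. pose proof PI_pos.
  destruct (Rle_dec PI t); destruct (Rle_dec (-PI) _); lra.
Qed.

Lemma clamp_id t : Ipi t -> clamp t = t.
Proof.
  unfold clamp, Ipi, Rmax, Rmin; intros.
  destruct (Rle_dec PI t); destruct (Rle_dec (-PI) _); lra.
Qed.

Lemma clamp_lip s t : Rabs (clamp s - clamp t) <= Rabs (s - t).
Proof.
  unfold clamp, Rmax, Rmin. pose proof PI_pos.
  destruct (Rle_dec PI s); destruct (Rle_dec PI t);
  repeat match goal with |- context [Rle_dec ?a ?b] => destruct (Rle_dec a b) end;
  unfold Rabs; repeat destruct Rcase_abs; lra.
Qed.

Lemma cont_clamp_abs g : cont_on (-PI) PI g ->
  forall t, continuity_pt (fun s => Rabs (g (clamp s))) t.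
Proof.
  intros Hg t. unfold continuity_pt, continue_in, limit1_in, limit_in; simpl; unfold R_dist.
  intros eps Heps.
  destruct (Hg (clamp t) (clamp_Ipi t) eps Heps) as [d [Hd Hd']].
  exists d; split; auto. intros s [_ Hs].
  apply Rle_lt_trans with (Rabs (g (clamp s) - g (clamp t))).
  - apply Rabs_triang_inv2.
  - apply Hd'. apply clamp_Ipi. apply Rle_lt_trans with (Rabs (s - t)); auto. apply clamp_lip.
Qed.

Lemma cont_bnd g : cont_on (-PI) PI g -> bnd g.
Proof.
  intros Hg. pose proof PI_pos.
  destruct (continuity_ab_maj (fun s => Rabs (g (clamp s))) (-PI) PI) as [Mx [HM _]].
  - lra.
  - intros c _; apply cont_clamp_abs; auto.
  - exists (Rabs (g (clamp Mx))). intros t Ht.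
    specialize (HM t Ht). simpl in HM. rewrite clamp_id in HM; auto.
Qed.

Lemma bnd_sub g h : bnd g -> bnd h -> bnd (fun t => g t - h t).
Proof.
  intros [B1 H1] [B2 H2]. exists (B1 + B2). intros t Ht.
  eapply Rle_trans; [apply Rabs_triang|]. rewrite Rabs_Ropp. specialize (H1 t Ht); specialize (H2 t Ht); lra.
Qed.

Lemma supnorm_triang g h : bnd g -> bnd h ->
  supnorm (fun t => g t - h t) <= supnorm g + supnorm h.
Proof.
  intros Hg Hh. apply supnorm_le. intros t Ht.
  eapply Rle_trans; [apply Rabs_triang|]. rewrite Rabs_Ropp.
  pose proof (supnorm_ge g t Hg Ht); pose proof (supnorm_ge h t Hh Ht); lra.
Qed.

Lemma modcont_ge f d s t : bnd f -> Ipi s -> Ipi t -> Rabs (s - t) <= d ->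
  Rabs (f s - f t) <= modcont f d.
Proof.
  intros [B HB] Hs Ht Hd. unfold modcont. apply sup_R_ub.
  - exists s, t; split; [auto|split; [auto|split; auto]].
  - exists (B + B). intros y [a [b [Ha [Hb [_ ->]]]]].
    eapply Rle_trans; [apply Rabs_triang|]. rewrite Rabs_Ropp.
    pose proof (HB a Ha); pose proof (HB b Hb); lra.
Qed.

Lemma modcont_nonneg f d : 0 <= d -> 0 <= modcont f d.
Proof.
  intros Hd. unfold modcont. apply sup_R_ge_elem with (Rabs (f 0 - f 0)).
  - exists 0, 0; split; [apply Ipi0|split; [apply Ipi0|split; [|auto]]]. rewrite Rminus_diag, Rabs_R0; auto.
  - apply Rabs_pos.
Qed.

Section MC.
Variable f : R -> R.
Variable dl : R.
Hypothesis Hf : bnd f.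
Hypothesis Hdl : 0 < dl.
Let w := modcont f dl.

Lemma w_nonneg : 0 <= w.
Proof. apply modcont_nonneg; lra. Qed.

Lemma mc1 s t : Ipi s -> Ipi t -> Rabs (s - t) <= dl -> Rabs (f s - f t) <= w.
Proof. intros; apply modcont_ge; auto. Qed.

Lemma mc_chain k : forall s t, Ipi s -> Ipi t -> Rabs (s - t) <= INR (S k) * dl ->
  Rabs (f s - f t) <= INR (S k) * w.
Proof.
  pose proof w_nonneg as Hw.
  induction k as [|k IH]; intros s t Hs Ht Hst.
  - simpl in *. rewrite Rmult_1_l in *. apply mc1; auto.
  - destruct (Rle_dec (Rabs (s - t)) dl) as [Hle|Hgt].
    + apply Rle_trans with w. apply mc1; auto.
      rewrite S_INR. pose proof (pos_INR (S k)). nra.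
    + rewrite S_INR in Hst. rewrite S_INR.
      unfold Rabs in Hgt; destruct (Rcase_abs (s - t)).
      *
        assert (Hu : Ipi (s + dl)) by (unfold Ipi in *; lra).
        replace (f s - f t) with ((f s - f (s + dl)) + (f (s + dl) - f t)) by ring.
        eapply Rle_trans; [apply Rabs_triang|].
        assert (H1 : Rabs (f s - f (s + dl)) <= w).
        { apply mc1; auto. replace (s - (s + dl)) with (- dl) by ring.
          rewrite Rabs_Ropp, Rabs_right; lra. }
        assert (H2 : Rabs (f (s + dl) - f t) <= INR (S k) * w).
        { apply IH; auto. rewrite Rabs_left1 by lra.
          unfold Rabs in Hst; destruct (Rcase_abs (s - t)); lra. }
        lra.
      * assert (Hu : Ipi (s - dl)) by (unfold Ipi in *; lra).
        replace (f s - f t) with ((f s - f (s - dl)) + (f (s - dl) - f t)) by ring.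
        eapply Rle_trans; [apply Rabs_triang|].
        assert (H1 : Rabs (f s - f (s - dl)) <= w).
        { apply mc1; auto. replace (s - (s - dl)) with dl by ring.
          rewrite Rabs_right; lra. }
        assert (H2 : Rabs (f (s - dl) - f t) <= INR (S k) * w).
        { apply IH; auto. rewrite Rabs_right by lra.
          unfold Rabs in Hst; destruct (Rcase_abs (s - t)); lra. }
        lra.
Qed.

Lemma mc_lin s t : Ipi s -> Ipi t -> Rabs (f s - f t) <= (1 + Rabs (s - t) / dl) * w.
Proof.
  intros Hs Ht. pose proof w_nonneg as Hw.
  set (x := Rabs (s - t) / dl).
  assert (Hx : 0 <= x) by (unfold x; apply Rmult_le_pos; [apply Rabs_pos|apply Rlt_le, Rinv_0_lt_compat; lra]).
  destruct (archimed x) as [H1 H2].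
  assert (Hup : (0 < up x)%Z) by (apply lt_IZR; simpl; lra).
  destruct (Z.to_nat (up x)) as [|k] eqn:Ek.
  - exfalso. assert (up x = Z.of_nat 0). { rewrite <- Ek. rewrite Z2Nat.id; lia. } lia.
  - assert (HI : INR (S k) = IZR (up x)).
    { rewrite <- Ek. rewrite INR_IZR_INZ. rewrite Z2Nat.id; [reflexivity|lia]. }
    apply Rle_trans with (INR (S k) * w).
    + apply mc_chain; auto. rewrite HI.
      assert (Rabs (s - t) = x * dl) by (unfold x; field; lra). nra.
    + rewrite HI. nra.
Qed.

Hypothesis Hper : f (- PI) = f PI.

Lemma mc_per s t : Ipi s -> Ipi t ->
  Rabs (f t - f s) <= (2 + Rmin (Rabs (t - s)) (2 * PI - Rabs (t - s)) / dl) * w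
  /\ (Rmin (Rabs (t - s)) (2 * PI - Rabs (t - s)) <= dl -> Rabs (f t - f s) <= 2 * w).
Proof.
  intros Hs Ht. pose proof w_nonneg as Hw. pose proof PI_pos.
  assert (HpI : Ipi PI) by (unfold Ipi; lra).
  assert (HmI : Ipi (-PI)) by (unfold Ipi; lra).
  assert (Hgen : forall a b, Ipi a -> Ipi b -> a <= b ->
     Rabs (f b - f a) <= (2 + (2 * PI - (b - a)) / dl) * w /\
     (2 * PI - (b - a) <= dl -> Rabs (f b - f a) <= 2 * w)).
  { intros a b Ha Hb Hab.
    replace (f b - f a) with ((f b - f PI) + (f (-PI) - f a)) by (rewrite Hper; ring).
    pose proof (mc_lin b PI Hb HpI) as E1. pose proof (mc_lin (-PI) a HmI Ha) as E2.
    rewrite (Rabs_left1 (b - PI)) in E1 by (unfold Ipi in *; lra).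
    rewrite (Rabs_left1 (-PI - a)) in E2 by (unfold Ipi in *; lra).
    split.
    - eapply Rle_trans; [apply Rabs_triang|].
      assert (((2 + (2 * PI - (b - a)) / dl) * w) =
              (1 + - (b - PI) / dl) * w + (1 + - (- PI - a) / dl) * w) by (field; lra).
      lra.
    - intros Hd. eapply Rle_trans; [apply Rabs_triang|].
      assert (Rabs (f b - f PI) <= w) by (apply mc1; auto; rewrite Rabs_left1; unfold Ipi in *; lra).
      assert (Rabs (f (-PI) - f a) <= w) by (apply mc1; auto; rewrite Rabs_left1; unfold Ipi in *; lra).
      lra. }
  assert (Hdir : Rabs (f t - f s) <= (1 + Rabs (t - s) / dl) * w) by (apply mc_lin; auto).
  unfold Rmin. destruct (Rle_dec (Rabs (t - s)) (2 * PI - Rabs (t - s))) as [Hc|Hc].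
  - split.
    + eapply Rle_trans; [apply Hdir|]. apply Rmult_le_compat_r; auto. lra.
    + intros Hd. apply Rle_trans with w; [apply mc1; auto|lra].
  - destruct (Rle_dec s t) as [Hst|Hst].
    + rewrite (Rabs_right (t - s)) by lra. apply Hgen; auto.
    + rewrite (Rabs_left (t - s)) by lra. replace (- (t - s)) with (s - t) by ring.
      rewrite <- Rabs_Ropp. replace (- (f t - f s)) with (f s - f t) by ring.
      apply Hgen; auto; lra.
Qed.

End MC.

Lemma cont_on_ext a b g h : (forall t, a <= t <= b -> g t = h t) ->
  cont_on a b g -> cont_on a b h.
Proof.
  intros E Hg t Ht eps He. destruct (Hg t Ht eps He) as [d [Hd H]].
  exists d; split; auto. intros s Hs Hst. rewrite <- !E; auto.
Qed.

Lemma cont_on_const a b c : cont_on a b (fun _ => c).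
Proof.
  intros t Ht eps He. exists 1; split; [lra|]. intros. rewrite Rminus_diag, Rabs_R0; auto.
Qed.

Lemma cont_on_plus a b g h : cont_on a b g -> cont_on a b h -> cont_on a b (fun t => g t + h t).
Proof.
  intros Hg Hh t Ht eps He.
  destruct (Hg t Ht (eps/2)) as [d1 [Hd1 H1]]; [lra|].
  destruct (Hh t Ht (eps/2)) as [d2 [Hd2 H2]]; [lra|].
  exists (Rmin d1 d2); split; [apply Rmin_pos; auto|]. intros s Hs Hst.
  replace (g s + h s - (g t + h t)) with ((g s - g t) + (h s - h t)) by ring.
  eapply Rle_lt_trans; [apply Rabs_triang|].
  assert (Rabs (s - t) < d1) by (eapply Rlt_le_trans; [apply Hst|apply Rmin_l]).
  assert (Rabs (s - t) < d2) by (eapply Rlt_le_trans; [apply Hst|apply Rmin_r]).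
  specialize (H1 s Hs H); specialize (H2 s Hs H0). lra.
Qed.

Lemma cont_on_scal a b c g : cont_on a b g -> cont_on a b (fun t => c * g t).
Proof.
  intros Hg t Ht eps He.
  destruct (Hg t Ht (eps / (Rabs c + 1))) as [d [Hd H]].
  { apply Rdiv_lt_0_compat; auto. pose proof (Rabs_pos c); lra. }
  exists d; split; auto. intros s Hs Hst.
  replace (c * g s - c * g t) with (c * (g s - g t)) by ring. rewrite Rabs_mult.
  specialize (H s Hs Hst). pose proof (Rabs_pos c).
  apply Rle_lt_trans with ((Rabs c + 1) * Rabs (g s - g t)).
  - pose proof (Rabs_pos (g s - g t)); nra.
  - assert (Rabs c + 1 > 0) by lra.
    apply Rmult_lt_compat_l with (r := Rabs c + 1) in H; auto.
    replace ((Rabs c + 1) * (eps / (Rabs c + 1))) with eps in H by (field; lra). auto.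
Qed.

Lemma cont_on_opp a b g : cont_on a b g -> cont_on a b (fun t => - g t).
Proof.
  intros H. apply cont_on_ext with (fun t => (-1) * g t); [intros; ring|].
  apply cont_on_scal; auto.
Qed.

Lemma cont_on_minus a b g h : cont_on a b g -> cont_on a b h -> cont_on a b (fun t => g t - h t).
Proof.
  intros. apply cont_on_ext with (fun t => g t + - h t); [intros; ring|].
  apply cont_on_plus; auto. apply cont_on_opp; auto.
Qed.

Lemma cont_on_comp a b c d h phi L : 0 < L -> cont_on a b h ->
  (forall t, c <= t <= d -> a <= phi t <= b) ->
  (forall s t, c <= s <= d -> c <= t <= d -> Rabs (phi s - phi t) <= L * Rabs (s - t)) ->
  cont_on c d (fun t => h (phi t)).
Proof.
  intros HL Hh Hmap Hlip t Ht eps He.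
  destruct (Hh (phi t) (Hmap t Ht) eps He) as [e [He' H]].
  exists (e / L); split; [apply Rdiv_lt_0_compat; auto|].
  intros s Hs Hst. apply H; auto.
  eapply Rle_lt_trans; [apply Hlip; auto|].
  apply Rmult_lt_compat_l with (r := L) in Hst; auto.
  replace (L * (e / L)) with e in Hst by (field; lra). auto.
Qed.

Lemma cont_on_glue a b c g : a <= b -> b <= c -> cont_on a b g -> cont_on b c g -> cont_on a c g.
Proof.
  intros Hab Hbc H1 H2 t Ht eps He.
  destruct (Rlt_le_dec t b) as [Hlt|Hge].
  - destruct (H1 t (conj (proj1 Ht) (Rlt_le _ _ Hlt)) eps He) as [d [Hd H]].
    exists (Rmin d (b - t)); split; [apply Rmin_pos; lra|].
    intros s Hs Hst. apply H.
    + split; [lra|]. assert (Rabs (s - t) < b - t) by (eapply Rlt_le_trans; [apply Hst|apply Rmin_r]).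
      unfold Rabs in H0; destruct Rcase_abs in H0; lra.
    + eapply Rlt_le_trans; [apply Hst|apply Rmin_l].
  - destruct (Rle_lt_dec t b) as [Heq|Hgt].
    + assert (t = b) by lra. subst t.
      destruct (H1 b (conj Hab (Rle_refl _)) eps He) as [d1 [Hd1 Ha]].
      destruct (H2 b (conj (Rle_refl _) Hbc) eps He) as [d2 [Hd2 Hb]].
      exists (Rmin d1 d2); split; [apply Rmin_pos; auto|].
      intros s Hs Hst. destruct (Rle_dec s b).
      * apply Ha; [lra|]. eapply Rlt_le_trans; [apply Hst|apply Rmin_l].
      * apply Hb; [lra|]. eapply Rlt_le_trans; [apply Hst|apply Rmin_r].
    + destruct (H2 t (conj (Rlt_le _ _ Hgt) (proj2 Ht)) eps He) as [d [Hd H]].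
      exists (Rmin d (t - b)); split; [apply Rmin_pos; lra|].
      intros s Hs Hst. apply H.
      * split; [|lra]. assert (Rabs (s - t) < t - b) by (eapply Rlt_le_trans; [apply Hst|apply Rmin_r]).
        unfold Rabs in H0; destruct Rcase_abs in H0; lra.
      * eapply Rlt_le_trans; [apply Hst|apply Rmin_l].
Qed.

Lemma Rle_eps x y : (forall eps, 0 < eps -> x <= y + eps) -> x <= y.
Proof.
  intros H. destruct (Rle_lt_dec x y) as [|Hlt]; auto.
  specialize (H ((x - y) / 2)). lra.
Qed.

Lemma alpha_norm_spec alpha k : (forall i, (1 <= i <= k)%nat -> -1 < alpha i < 1) ->
  0 <= alpha_norm alpha k < 1 /\ forall i, (1 <= i <= k)%nat -> Rabs (alpha i) <= alpha_norm alpha k.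
Proof.
  induction k as [|k IH]; intros H.
  - simpl; split; [lra|]. intros; lia.
  - destruct IH as [[H0 H1] H2]. { intros i Hi; apply H; lia. }
    simpl. assert (Ha : Rabs (alpha (S k)) < 1).
    { destruct (H (S k)) as [A B]; [lia|]. unfold Rabs; destruct Rcase_abs; lra. }
    split; [split|].
    + eapply Rle_trans; [apply H0|apply Rmax_r].
    + apply Rmax_lub_lt; auto.
    + intros i Hi. destruct (Nat.eq_dec i (S k)) as [->|Hne]; [apply Rmax_l|].
      eapply Rle_trans; [apply H2; lia|apply Rmax_r].
Qed.

Section Part.
Variable N : nat.
Variable x : nat -> R.
Hypothesis Hp : partition N x.

Lemma part_mono i j : (i <= j <= N)%nat -> x i <= x j.
Proof.
  destruct Hp as [_ [_ [_ Hinc]]]. intros [Hij HjN].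
  induction Hij; [lra|]. apply Rle_trans with (x m); [apply IHHij; lia|]. apply Rlt_le, Hinc; lia.
Qed.

Lemma part_smono i j : (i < j <= N)%nat -> x i < x j.
Proof.
  destruct Hp as [_ [_ [_ Hinc]]]. intros [Hij HjN].
  apply Rlt_le_trans with (x (S i)); [apply Hinc; lia|]. apply part_mono; lia.
Qed.

Lemma part_x0 : x 0%nat = - PI. Proof. destruct Hp as [_ [H _]]; auto. Qed.
Lemma part_xN : x N = PI. Proof. destruct Hp as [_ [_ [H _]]]; auto. Qed.
Lemma part_N : (2 <= N)%nat. Proof. destruct Hp as [H _]; auto. Qed.

Lemma part_Ipi i : (i <= N)%nat -> Ipi (x i).
Proof.
  intros. unfold Ipi. rewrite <- part_x0, <- part_xN. split; apply part_mono; lia.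
Qed.

Lemma part_interval_Ipi i t : (1 <= i <= N)%nat -> x (i - 1)%nat <= t <= x i -> Ipi t.
Proof.
  intros Hi Ht. pose proof (part_Ipi (i-1) ltac:(lia)). pose proof (part_Ipi i ltac:(lia)).
  unfold Ipi in *; lra.
Qed.

Lemma part_index t : Ipi t -> exists i, (1 <= i <= N)%nat /\ x (i - 1)%nat <= t <= x i.
Proof.
  intros Ht. pose proof part_N as HN2.
  assert (H : forall k, (1 <= k <= N)%nat -> x 0%nat <= t <= x k ->
            exists i, (1 <= i <= N)%nat /\ x (i - 1)%nat <= t <= x i).
  { induction k as [|k IH]; intros Hk Htk; [lia|].
    destruct (Nat.eq_dec k 0) as [->|Hk0].
    - exists 1%nat; split; [lia|]. simpl; auto.
    - destruct (Rle_dec t (x k)).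
      + apply IH; [lia|lra].
      + exists (S k); split; [lia|]. replace (S k - 1)%nat with k by lia. lra. }
  apply (H N); [lia|]. rewrite part_x0, part_xN; auto.
Qed.

Definition slope i := (x N - x 0%nat) / (x i - x (i - 1)%nat).

Lemma slope_pos i : (1 <= i <= N)%nat -> 0 < slope i.
Proof.
  intros Hi. unfold slope. apply Rdiv_lt_0_compat.
  - rewrite part_x0, part_xN; pose proof PI_pos; lra.
  - pose proof (part_smono (i-1) i ltac:(lia)); lra.
Qed.

Lemma Linv_eq i y : (1 <= i <= N)%nat -> Linv N x i y = x 0%nat + slope i * (y - x (i - 1)%nat).
Proof.
  intros Hi. unfold Linv, slope. pose proof (part_smono (i-1) i ltac:(lia)). field. lra.
Qed.

Lemma Linv_lip i s t : (1 <= i <= N)%nat ->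
  Rabs (Linv N x i s - Linv N x i t) <= slope i * Rabs (s - t).
Proof.
  intros Hi. rewrite !Linv_eq by auto.
  replace (x 0%nat + slope i * (s - x (i - 1)%nat) - (x 0%nat + slope i * (t - x (i - 1)%nat)))
    with (slope i * (s - t)) by ring.
  rewrite Rabs_mult, Rabs_right; [lra|]. apply Rle_ge, Rlt_le, slope_pos; auto.
Qed.

Lemma Linv_left i : (1 <= i <= N)%nat -> Linv N x i (x (i - 1)%nat) = - PI.
Proof. intros. rewrite Linv_eq by auto. rewrite part_x0. ring. Qed.

Lemma Linv_right i : (1 <= i <= N)%nat -> Linv N x i (x i) = PI.
Proof.
  intros. unfold Linv. rewrite part_x0, part_xN.
  pose proof (part_smono (i-1) i ltac:(lia)). field. lra.
Qed.

Lemma Linv_Ipi i t : (1 <= i <= N)%nat -> x (i - 1)%nat <= t <= x i -> Ipi (Linv N x i t).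
Proof.
  intros Hi Ht. rewrite Linv_eq by auto. pose proof (slope_pos i Hi).
  unfold slope in *. pose proof (part_smono (i-1) i ltac:(lia)).
  rewrite part_x0, part_xN in *. unfold Ipi. split.
  - assert (0 <= (PI - - PI) / (x i - x (i - 1)%nat) * (t - x (i - 1)%nat)) by (apply Rmult_le_pos; lra). lra.
  - assert ((PI - - PI) / (x i - x (i - 1)%nat) * (t - x (i - 1)%nat) <= PI - - PI).
    { unfold Rdiv. rewrite Rmult_assoc. rewrite <- (Rmult_1_r (PI - - PI)) at 2.
      apply Rmult_le_compat_l; [pose proof PI_pos; lra|].
      apply (Rmult_le_reg_l (x i - x (i - 1)%nat)); [lra|].
      field_simplify; lra. }
    lra.
Qed.

Lemma piecewise_cont g : (forall i, (1 <= i <= N)%nat -> cont_on (x (i - 1)%nat) (x i) g) ->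
  cont_on (- PI) PI g.
Proof.
  intros H. rewrite <- part_x0, <- part_xN. pose proof part_N as HN2.
  assert (forall k, (1 <= k <= N)%nat -> cont_on (x 0%nat) (x k) g).
  { induction k as [|k IH]; intros Hk; [lia|].
    destruct (Nat.eq_dec k 0) as [->|Hk0]; [apply (H 1%nat); lia|].
    apply cont_on_glue with (x k); [apply part_mono; lia|apply part_mono; lia| apply IH; lia|].
    replace k with (S k - 1)%nat at 1 by lia. apply H; lia. }
  apply H0; lia.
Qed.

End Part.

Section FIF.
Variable N : nat.
Variable x : nat -> R.
Variable alpha : nat -> R.
Hypothesis Hp : partition N x.
Hypothesis Halpha : forall i, (1 <= i <= N)%nat -> -1 < alpha i < 1.
Variable v : R -> R.
Hypothesis Hv : cont_on (- PI) PI v.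
Hypothesis Hv0 : v (- PI) = 0.
Hypothesis Hv1 : v PI = 0.

Let a := alpha_norm alpha N.
Lemma a_bounds : 0 <= a < 1.
Proof. apply (alpha_norm_spec alpha N Halpha). Qed.
Lemma a_ge i : (1 <= i <= N)%nat -> Rabs (alpha i) <= a.
Proof. apply (alpha_norm_spec alpha N Halpha). Qed.

Definition ispec (t : R) (i : nat) : Prop := (1 <= i <= N)%nat /\ x (i - 1)%nat <= t <= x i.

Definition idx (t : R) : nat := epsilon (inhabits 0%nat) (ispec t).

Lemma idx_spec t : Ipi t -> ispec t (idx t).
Proof.
  intros Ht. unfold idx. apply epsilon_spec. destruct (part_index N x Hp t Ht) as [i Hi].
  exists i; auto.
Qed.

Definition Top (w : R -> R) (t : R) : R :=
  if excluded_middle_informative (Ipi t) then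
    alpha (idx t) * (w (Linv N x (idx t) t) + v (Linv N x (idx t) t))
  else 0.

Definition Pw (w : R -> R) : Prop := cont_on (- PI) PI w /\ w (- PI) = 0 /\ w PI = 0.

Lemma Top_spec w i t : Pw w -> (1 <= i <= N)%nat -> x (i - 1)%nat <= t <= x i ->
  Top w t = alpha i * (w (Linv N x i t) + v (Linv N x i t)).
Proof.
  intros [_ [Hw0 Hw1]] Hi Ht. unfold Top.
  assert (HI : Ipi t) by (eapply part_interval_Ipi; eauto).
  destruct (excluded_middle_informative (Ipi t)) as [_|C]; [|contradiction].
  destruct (idx_spec t HI) as [Hj Htj]. set (j := idx t) in *.
  destruct (Nat.lt_total i j) as [Hlt|[Heq|Hgt]].
  - assert (x i <= x (j - 1)%nat) by (apply part_mono with N; auto; lia).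
    assert (Et : t = x i) by lra.
    assert (Et' : t = x (j - 1)%nat) by lra.
    assert (L1 : Linv N x i t = PI) by (rewrite Et; apply (Linv_right N x Hp); auto).
    assert (L2 : Linv N x j t = - PI) by (rewrite Et'; apply (Linv_left N x Hp); auto).
    rewrite L1, L2, Hw0, Hv0, Hw1, Hv1. ring.
  - subst; auto.
  - assert (x j <= x (i - 1)%nat) by (apply part_mono with N; auto; lia).
    assert (Et : t = x j) by lra.
    assert (Et' : t = x (i - 1)%nat) by lra.
    assert (L1 : Linv N x j t = PI) by (rewrite Et; apply (Linv_right N x Hp); auto).
    assert (L2 : Linv N x i t = - PI) by (rewrite Et'; apply (Linv_left N x Hp); auto).
    rewrite L1, L2, Hw0, Hv0, Hw1, Hv1. ring.
Qed.

Lemma Top_P w : Pw w -> Pw (Top w).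
Proof.
  intros HP. pose proof (part_N N x Hp) as HN.
  split; [|split].
  - apply (piecewise_cont N x Hp). intros i Hi.
    apply cont_on_ext with (fun t => alpha i * (w (Linv N x i t) + v (Linv N x i t))).
    { intros t Ht. symmetry. apply Top_spec; auto. }
    apply cont_on_scal.
    apply cont_on_comp with (a := - PI) (b := PI) (L := slope N x i)
      (h := fun s => w s + v s).
    + apply slope_pos; auto.
    + apply cont_on_plus; auto. apply HP.
    + intros t Ht. apply (Linv_Ipi N x Hp i t Hi Ht).
    + intros s t _ _. apply Linv_lip; auto.
  - rewrite <- (part_x0 N x Hp). rewrite (Top_spec w 1%nat) by (auto; try lia; simpl; pose proof (part_mono N x Hp 0 1 ltac:(lia)); lra).
    assert (L : Linv N x 1 (x 0%nat) = - PI) by (apply (Linv_left N x Hp 1%nat); lia).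
    rewrite L. destruct HP as [_ [H0 _]]. rewrite H0, Hv0. ring.
  - rewrite <- (part_xN N x Hp). rewrite (Top_spec w N) by (auto; try lia; pose proof (part_mono N x Hp (N-1) N ltac:(lia)); lra).
    rewrite (Linv_right N x Hp N ltac:(lia)).
    destruct HP as [_ [_ H1]]. rewrite H1, Hv1. ring.
Qed.

Lemma Top_contr w1 w2 B : (forall s, Ipi s -> Rabs (w1 s - w2 s) <= B) ->
  forall t, Rabs (Top w1 t - Top w2 t) <= a * B.
Proof.
  intros HB t. pose proof a_bounds.
  assert (HB0 : 0 <= B) by (eapply Rle_trans; [apply Rabs_pos|apply (HB 0 Ipi0)]).
  unfold Top. destruct (excluded_middle_informative (Ipi t)) as [HI|HI].
  - destruct (idx_spec t HI) as [Hj Htj].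
    replace (alpha (idx t) * (w1 (Linv N x (idx t) t) + v (Linv N x (idx t) t)) -
             alpha (idx t) * (w2 (Linv N x (idx t) t) + v (Linv N x (idx t) t)))
      with (alpha (idx t) * (w1 (Linv N x (idx t) t) - w2 (Linv N x (idx t) t))) by ring.
    rewrite Rabs_mult. apply Rmult_le_compat; try apply Rabs_pos.
    + apply a_ge; auto.
    + apply HB. apply Linv_Ipi; auto.
  - rewrite Rminus_diag, Rabs_R0. nra.
Qed.

Definition useq (k : nat) : R -> R := Nat.iter k Top (fun _ => 0).

Lemma useq_P k : Pw (useq k).
Proof.
  induction k as [|k IH].
  - simpl. split; [apply cont_on_const|split; auto].
  - simpl. apply Top_P. apply IH.
Qed.

Lemma useq_S k : useq (S k) = Top (useq k).
Proof. reflexivity. Qed.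

Definition Bv : R := proj1_sig (constructive_indefinite_description _ (cont_bnd v Hv)).
Lemma Bv_spec t : Ipi t -> Rabs (v t) <= Bv.
Proof.
  unfold Bv. destruct (constructive_indefinite_description _ _) as [B HB]; simpl; auto.
Qed.
Lemma Bv_nonneg : 0 <= Bv.
Proof. eapply Rle_trans; [apply Rabs_pos|apply (Bv_spec 0 Ipi0)]. Qed.

Definition Cc := a * Bv.

Lemma Cc_nonneg : 0 <= Cc.
Proof. unfold Cc. pose proof a_bounds; pose proof Bv_nonneg; nra. Qed.

Lemma useq_diff1 k : forall t, Rabs (useq (S k) t - useq k t) <= Cc * a ^ k.
Proof.
  induction k as [|k IH]; intros t.
  - simpl. rewrite Rmult_1_r. unfold Top. rewrite Rminus_0_r.
    destruct (excluded_middle_informative (Ipi t)) as [HI|HI].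
    + destruct (idx_spec t HI) as [Hj Htj]. rewrite Rplus_0_l, Rabs_mult.
      unfold Cc. apply Rmult_le_compat; try apply Rabs_pos.
      * apply a_ge; auto.
      * apply Bv_spec. apply Linv_Ipi; auto.
    + rewrite Rabs_R0. apply Cc_nonneg.
  - rewrite (useq_S (S k)), (useq_S k).
    eapply Rle_trans; [apply Top_contr|].
    + intros s _. rewrite <- useq_S. apply IH.
    + simpl. lra.
Qed.

Lemma useq_diff k p : forall t, Rabs (useq (k + p) t - useq k t) <= Cc * a ^ k / (1 - a).
Proof.
  pose proof a_bounds. pose proof Cc_nonneg.
  assert (Hak : 0 <= a ^ k) by (apply pow_le; lra).
  induction p as [|p IH]; intros t.
  - rewrite Nat.add_0_r, Rminus_diag, Rabs_R0. apply Rmult_le_pos; [nra|].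
    apply Rlt_le, Rinv_0_lt_compat; lra.
  -
    assert (G : forall q t, Rabs (useq (k + q) t - useq k t) <= Cc * a ^ k * (1 - a ^ q) / (1 - a)).
    { induction q as [|q IQ]; intros s.
      - rewrite Nat.add_0_r, Rminus_diag, Rabs_R0. simpl. unfold Rdiv. rewrite Rminus_diag. lra.
      - replace (useq (k + S q) s - useq k s) with
          ((useq (S (k + q)) s - useq (k + q) s) + (useq (k + q) s - useq k s))
          by (rewrite Nat.add_succ_r; ring).
        eapply Rle_trans; [apply Rabs_triang|].
        pose proof (useq_diff1 (k + q) s). pose proof (IQ s).
        rewrite pow_add in H1.
        apply Rle_trans with (Cc * (a ^ k * a ^ q) + Cc * a ^ k * (1 - a ^ q) / (1 - a)); [lra|].
        right. simpl. field. lra. }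
    eapply Rle_trans; [apply G|].
    assert (0 <= a ^ S p) by (apply pow_le; lra).
    unfold Rdiv. apply Rmult_le_compat_r; [apply Rlt_le, Rinv_0_lt_compat; lra|].
    assert (0 <= Cc * a ^ k) by nra. nra.
Qed.

Lemma pow_small eps : 0 < eps -> exists k, forall n, (n >= k)%nat -> a ^ n < eps.
Proof.
  intros He. pose proof a_bounds.
  destruct (pow_lt_1_zero a ltac:(rewrite Rabs_right; lra) eps He) as [k Hk].
  exists k. intros n Hn. specialize (Hk n Hn). rewrite Rabs_right in Hk; auto.
  apply Rle_ge, pow_le; lra.
Qed.

Lemma useq_cauchy t : Cauchy_crit (fun k => useq k t).
Proof.
  intros eps He. pose proof a_bounds. pose proof Cc_nonneg.
  destruct (pow_small (eps * (1 - a) / (Cc + 1))) as [k Hk].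
  { apply Rdiv_lt_0_compat; [apply Rmult_lt_0_compat; lra|lra]. }
  exists k. intros n m Hn Hm. unfold R_dist.
  assert (Gen : forall p q, (p >= k)%nat -> (q >= p)%nat -> Rabs (useq q t - useq p t) < eps).
  { intros p q Hp' Hq. replace q with (p + (q - p))%nat by lia.
    eapply Rle_lt_trans; [apply useq_diff|].
    specialize (Hk p Hp').
    assert (Cc * a ^ p < eps * (1 - a)).
    { apply Rle_lt_trans with ((Cc + 1) * a ^ p).
      - assert (0 <= a ^ p) by (apply pow_le; lra). nra.
      - apply Rmult_lt_compat_l with (r := Cc + 1) in Hk; [|lra].
        replace ((Cc + 1) * (eps * (1 - a) / (Cc + 1))) with (eps * (1 - a)) in Hk by (field; lra). auto. }
    apply (Rmult_lt_reg_r (1 - a)); [lra|]. unfold Rdiv. rewrite Rmult_assoc, Rinv_l by lra. lra. }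
  destruct (Nat.le_ge_cases n m).
  - rewrite <- Rabs_Ropp. replace (- (useq n t - useq m t)) with (useq m t - useq n t) by ring.
    apply Gen; lia.
  - apply Gen; lia.
Qed.

Definition ulim (t : R) : R := proj1_sig (R_complete _ (useq_cauchy t)).

Lemma ulim_cv t : Un_cv (fun k => useq k t) (ulim t).
Proof. unfold ulim. destruct (R_complete _ _) as [l Hl]; simpl; auto. Qed.

Lemma ulim_bound k t : Rabs (ulim t - useq k t) <= Cc * a ^ k / (1 - a).
Proof.
  apply Rle_eps. intros eps He. destruct (ulim_cv t eps He) as [K HK].
  specialize (HK (max K k) ltac:(lia)). unfold R_dist in HK.
  replace (ulim t - useq k t) with ((useq (max K k) t - useq k t) - (useq (max K k) t - ulim t)) by ring.
  eapply Rle_trans; [apply Rabs_triang|]. rewrite Rabs_Ropp.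
  pose proof (useq_diff k (max K k - k) t). replace (k + (max K k - k))%nat with (max K k) in H by lia.
  lra.
Qed.

Lemma small_bound (z : R) : (forall k, Rabs z <= 2 * Cc * a ^ k / (1 - a)) -> z = 0.
Proof.
  intros H. pose proof a_bounds. pose proof Cc_nonneg.
  destruct (Req_dec z 0) as [|Hz]; auto. exfalso.
  assert (Hpos : 0 < Rabs z) by (apply Rabs_pos_lt; auto).
  destruct (pow_small (Rabs z * (1 - a) / (2 * Cc + 1))) as [k Hk].
  { apply Rdiv_lt_0_compat; [apply Rmult_lt_0_compat; lra|lra]. }
  specialize (Hk k (le_n _)). specialize (H k).
  assert (0 <= a ^ k) by (apply pow_le; lra).
  assert (2 * Cc * a ^ k < Rabs z * (1 - a)).
  { apply Rle_lt_trans with ((2 * Cc + 1) * a ^ k); [nra|].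
    apply Rmult_lt_compat_l with (r := 2 * Cc + 1) in Hk; [|lra].
    replace ((2 * Cc + 1) * (Rabs z * (1 - a) / (2 * Cc + 1))) with (Rabs z * (1 - a)) in Hk by (field; lra). auto. }
  assert (Rabs z * (1 - a) <= 2 * Cc * a ^ k).
  { apply (Rmult_le_compat_r (1 - a)) in H; [|lra]. unfold Rdiv in H.
    rewrite Rmult_assoc, Rinv_l in H by lra. lra. }
  lra.
Qed.

Lemma ulim_P : Pw ulim.
Proof.
  pose proof a_bounds. pose proof Cc_nonneg.
  split; [|split].
  - intros t Ht eps He.
    destruct (pow_small (eps / 3 * (1 - a) / (Cc + 1))) as [k Hk].
    { apply Rdiv_lt_0_compat; [apply Rmult_lt_0_compat; lra|lra]. }
    specialize (Hk k (le_n _)).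
    assert (Hb : Cc * a ^ k / (1 - a) < eps / 3).
    { assert (0 <= a ^ k) by (apply pow_le; lra).
      apply (Rmult_lt_reg_r (1 - a)); [lra|]. unfold Rdiv at 1. rewrite Rmult_assoc, Rinv_l by lra.
      rewrite Rmult_1_r. apply Rle_lt_trans with ((Cc + 1) * a ^ k); [nra|].
      apply Rmult_lt_compat_l with (r := Cc + 1) in Hk; [|lra].
      replace ((Cc + 1) * (eps / 3 * (1 - a) / (Cc + 1))) with (eps / 3 * (1 - a)) in Hk by (field; lra). auto. }
    destruct (useq_P k) as [Hc _].
    destruct (Hc t Ht (eps / 3)) as [d [Hd H']]; [lra|].
    exists d; split; auto. intros s Hs Hst.
    replace (ulim s - ulim t) with ((ulim s - useq k s) + (useq k s - useq k t) - (ulim t - useq k t)) by ring.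
    eapply Rle_lt_trans; [apply Rabs_triang|]. rewrite Rabs_Ropp.
    eapply Rle_lt_trans; [apply Rplus_le_compat_r; apply Rabs_triang|].
    pose proof (ulim_bound k s). pose proof (ulim_bound k t). specialize (H' s Hs Hst). lra.
  - apply small_bound. intros k. pose proof (ulim_bound k (- PI)) as UB.
    destruct (useq_P k) as [_ [HZ _]]. rewrite HZ, Rminus_0_r in UB.
    eapply Rle_trans; [apply UB|]. unfold Rdiv. apply Rmult_le_compat_r; [apply Rlt_le, Rinv_0_lt_compat; lra|].
    assert (0 <= a ^ k) by (apply pow_le; lra). nra.
  - apply small_bound. intros k. pose proof (ulim_bound k PI) as UB.
    destruct (useq_P k) as [_ [_ HZ]]. rewrite HZ, Rminus_0_r in UB.
    eapply Rle_trans; [apply UB|]. unfold Rdiv. apply Rmult_le_compat_r; [apply Rlt_le, Rinv_0_lt_compat; lra|].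
    assert (0 <= a ^ k) by (apply pow_le; lra). nra.
Qed.

Lemma ulim_eq i t : (1 <= i <= N)%nat -> x (i - 1)%nat <= t <= x i ->
  ulim t = alpha i * (ulim (Linv N x i t) + v (Linv N x i t)).
Proof.
  intros Hi Ht. pose proof a_bounds. pose proof Cc_nonneg.
  set (s := Linv N x i t).
  assert (ulim t - alpha i * (ulim s + v s) = 0); [|lra].
  apply small_bound. intros k.
  assert (E : useq (S k) t = alpha i * (useq k s + v s)) by (rewrite useq_S; apply Top_spec; auto; apply useq_P).
  replace (ulim t - alpha i * (ulim s + v s)) with
    ((ulim t - useq (S k) t) - alpha i * (ulim s - useq k s)) by (rewrite E; ring).
  eapply Rle_trans; [apply Rabs_triang|]. rewrite Rabs_Ropp, Rabs_mult.
  pose proof (ulim_bound (S k) t). pose proof (ulim_bound k s).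
  pose proof (a_ge i Hi). pose proof (Rabs_pos (alpha i)).
  assert (Rabs (alpha i) * Rabs (ulim s - useq k s) <= a * (Cc * a ^ k / (1 - a))).
  { apply Rmult_le_compat; auto; apply Rabs_pos. }
  change (a ^ S k) with (a * a ^ k) in H1.
  assert (a * (Cc * a ^ k / (1 - a)) <= Cc * a ^ k / (1 - a)).
  { assert (0 <= Cc * a ^ k / (1 - a)).
    { unfold Rdiv. apply Rmult_le_pos; [apply Rmult_le_pos; [lra|apply pow_le; lra]|apply Rlt_le, Rinv_0_lt_compat; lra]. }
    nra. }
  assert (Cc * (a * a ^ k) / (1 - a) <= Cc * a ^ k / (1 - a)).
  { unfold Rdiv. apply Rmult_le_compat_r; [apply Rlt_le, Rinv_0_lt_compat; lra|].
    assert (0 <= a ^ k) by (apply pow_le; lra). assert (0 <= Cc * a ^ k) by nra. nra. }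
  assert (2 * Cc * a ^ k / (1 - a) = Cc * a ^ k / (1 - a) + Cc * a ^ k / (1 - a)) by (field; lra).
  lra.
Qed.

End FIF.

Theorem FIF_exists N x alpha r b : partition N x ->
  (forall i, (1 <= i <= N)%nat -> -1 < alpha i < 1) ->
  cont_on (- PI) PI r -> cont_on (- PI) PI b -> b (- PI) = r (- PI) -> b PI = r PI ->
  exists g, is_FIF N x alpha r b g.
Proof.
  intros Hp Ha Hr Hb H0 H1.
  set (v := fun t => r t - b t).
  assert (Hv : cont_on (- PI) PI v) by (apply cont_on_minus; auto).
  assert (Hv0 : v (- PI) = 0) by (unfold v; rewrite H0; ring).
  assert (Hv1 : v PI = 0) by (unfold v; rewrite H1; ring).
  set (u := ulim N x alpha Hp Ha v Hv).
  exists (fun t => r t + u t). split.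
  - apply cont_on_plus; auto. apply (ulim_P N x alpha Hp Ha v Hv Hv0 Hv1).
  - intros i Hi t Ht. unfold u. rewrite (ulim_eq N x alpha Hp Ha v Hv Hv0 Hv1 i t Hi Ht).
    unfold v. ring.
Qed.

Lemma FIF_bound N x alpha r b g V : partition N x ->
  (forall i, (1 <= i <= N)%nat -> -1 < alpha i < 1) ->
  cont_on (- PI) PI r -> (forall s, Ipi s -> Rabs (r s - b s) <= V) ->
  is_FIF N x alpha r b g ->
  forall t, Ipi t -> Rabs (g t - r t) <= alpha_norm alpha N / (1 - alpha_norm alpha N) * V.
Proof.
  intros Hp Ha Hr HV [Hg Heq].
  destruct (alpha_norm_spec alpha N Ha) as [[Ha0 Ha1] Hai].
  set (a := alpha_norm alpha N) in *.
  assert (Hb : bnd (fun t => g t - r t)) by (apply cont_bnd, cont_on_minus; auto).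
  set (G := supnorm (fun t => g t - r t)).
  assert (HG : G <= a * (G + V)).
  { apply supnorm_le. intros t Ht. destruct (part_index N x Hp t Ht) as [i [Hi Hti]].
    rewrite (Heq i Hi t Hti). set (s := Linv N x i t).
    assert (Hs : Ipi s) by (apply Linv_Ipi; auto).
    replace (r t + alpha i * (g s - b s) - r t) with (alpha i * ((g s - r s) + (r s - b s))) by ring.
    rewrite Rabs_mult. apply Rmult_le_compat; try apply Rabs_pos; [apply Hai; auto|].
    eapply Rle_trans; [apply Rabs_triang|].
    pose proof (supnorm_ge _ s Hb Hs) as E. cbv beta in E. fold G in E. pose proof (HV s Hs). lra. }
  intros t Ht. pose proof (supnorm_ge _ t Hb Ht) as H. cbv beta in H. fold G in H.
  assert (G <= a / (1 - a) * V).
  { assert (G * (1 - a) <= a * V) by lra.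
    apply (Rmult_le_reg_r (1 - a)); [lra|].
    replace (a / (1 - a) * V * (1 - a)) with (a * V) by (field; lra). lra. }
  lra.
Qed.

Lemma C2pi_bnd g : C2pi g -> bnd g.
Proof. intros [H _]; apply cont_bnd; auto. Qed.

Lemma L_zero N x L : admissible_L N x L -> forall g, C2pi g -> (forall t, Ipi t -> g t = 0) ->
  forall t, Ipi t -> L g t = 0.
Proof.
  intros [HC [Hcong [Hlin _]]] g Hg Hz t Ht.
  assert (H0 : C2pi (fun _ => 0)) by (split; [apply cont_on_const|auto]).
  rewrite (Hcong g (fun _ => 0) Hg H0 Hz t Ht).
  assert (H1 : C2pi (fun s => 0 * (fun _ => 0) s + 0 * (fun _ => 0) s)).
  { split; [apply cont_on_ext with (fun _ => 0); [intros; ring|apply cont_on_const]|ring]. }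
  rewrite (Hcong (fun _ => 0) (fun s => 0 * (fun _ => 0) s + 0 * (fun _ => 0) s) H0 H1) by (auto; intros; ring).
  rewrite Hlin by auto. ring.
Qed.

Lemma normL_bnd N x L : admissible_L N x L ->
  exists B, forall y, (exists g, C2pi g /\ supnorm g <= 1 /\ y = supnorm (fun t => g t - L g t)) -> y <= B.
Proof.
  intros HL. destruct HL as [HC [Hcong [Hlin [[M HM] _]]]].
  exists (1 + Rabs M). intros y [g [Hg [Hs ->]]].
  eapply Rle_trans; [apply supnorm_triang; apply C2pi_bnd; auto|].
  specialize (HM g Hg). pose proof (supnorm_nonneg g).
  assert (M * supnorm g <= Rabs M).
  { apply Rle_trans with (Rabs M * supnorm g); [apply Rmult_le_compat_r; auto; apply RRle_abs|].
    pose proof (Rabs_pos M). nra. }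
  lra.
Qed.

Lemma normL_nonneg N x L : admissible_L N x L -> 0 <= norm_IdmL L.
Proof.
  intros HL. unfold norm_IdmL. apply sup_R_ge_elem with (supnorm (fun t => (fun _ => 0) t - L (fun _ => 0) t)).
  - exists (fun _ => 0). split; [split; [apply cont_on_const|auto]|split; auto].
    apply supnorm_le. intros; rewrite Rabs_R0; lra.
  - apply supnorm_nonneg.
Qed.

Lemma opnorm_bound N x L r : admissible_L N x L -> C2pi r ->
  supnorm (fun t => r t - L r t) <= norm_IdmL L * supnorm r.
Proof.
  intros HL Hr. pose proof HL as HL'. destruct HL' as [HC [Hcong [Hlin _]]].
  pose proof (supnorm_nonneg r) as Hs0. set (s := supnorm r) in *.
  assert (Hrb : bnd r) by (apply C2pi_bnd; auto).
  assert (HK : 0 <= norm_IdmL L) by (eapply normL_nonneg; eauto).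
  destruct (Req_dec s 0) as [Hs|Hs].
  - rewrite Hs, Rmult_0_r. apply supnorm_le. intros t Ht.
    assert (Hz : forall u, Ipi u -> r u = 0).
    { intros u Hu. pose proof (supnorm_ge r u Hrb Hu). fold s in H. rewrite Hs in H.
      pose proof (Rabs_pos (r u)). destruct (Req_dec (r u) 0) as [|Hn]; auto. pose proof (Rabs_pos_lt _ Hn). lra. }
    rewrite Hz, (L_zero N x L HL r Hr Hz t Ht) by auto. rewrite Rminus_0_r, Rabs_R0. lra.
  - assert (Hsp : 0 < s) by lra.
    set (g := fun u => / s * r u).
    assert (Hg : C2pi g).
    { destruct Hr as [Hr1 Hr2]. split; [apply cont_on_scal; auto|unfold g; rewrite Hr2; auto]. }
    assert (HLg : forall t, Ipi t -> L g t = / s * L r t).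
    { intros t Ht. rewrite (Hcong g (fun u => / s * r u + 0 * r u) Hg).
      - rewrite Hlin by auto. ring.
      - destruct Hr as [Hr1 Hr2]. split.
        + apply cont_on_ext with g; [intros; unfold g; ring|apply Hg].
        + rewrite Hr2; auto.
      - intros; unfold g; ring.
      - auto. }
    assert (Hgs : supnorm g <= 1).
    { apply supnorm_le. intros t Ht. unfold g. rewrite Rabs_mult, Rabs_inv, (Rabs_right s) by lra.
      pose proof (supnorm_ge r t Hrb Ht). fold s in H.
      apply (Rmult_le_reg_l s); auto. rewrite <- Rmult_assoc, Rinv_r by lra. lra. }
    assert (Hel : supnorm (fun t => g t - L g t) <= norm_IdmL L).
    { unfold norm_IdmL. apply sup_R_ub.
      - exists g; auto.
      - apply normL_bnd with N x; auto. }
    assert (Hgb : bnd (fun t => g t - L g t)).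
    { apply bnd_sub; apply C2pi_bnd; auto. }
    apply supnorm_le. intros t Ht.
    replace (r t - L r t) with (s * (g t - L g t)) by (rewrite HLg by auto; unfold g; field; lra).
    rewrite Rabs_mult, (Rabs_right s) by lra.
    pose proof (supnorm_ge _ t Hgb Ht). simpl in H. rewrite Rmult_comm. apply Rmult_le_compat_r; lra.
Qed.

Lemma tp_ext m p q : (forall t, p t = q t) -> trig_poly m p -> trig_poly m q.
Proof. intros E [a [b H]]. exists a, b. intros t. rewrite <- E. apply H. Qed.

Lemma tp_add m p q : trig_poly m p -> trig_poly m q -> trig_poly m (fun t => p t + q t).
Proof.
  intros [a1 [b1 H1]] [a2 [b2 H2]]. exists (fun k => a1 k + a2 k), (fun k => b1 k + b2 k).
  intros t. rewrite H1, H2, <- sum_plus. apply sum_eq. intros; ring.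
Qed.

Lemma tp_scal m c p : trig_poly m p -> trig_poly m (fun t => c * p t).
Proof.
  intros [a [b H]]. exists (fun k => c * a k), (fun k => c * b k).
  intros t. rewrite H. rewrite scal_sum. apply sum_eq. intros; ring.
Qed.

Lemma sum_ind_gen (c : nat -> R) k m :
  sum_f_R0 (fun j => if Nat.eqb j k then c j else 0) m = if Nat.leb k m then c k else 0.
Proof.
  induction m as [|m IH].
  - cbn [sum_f_R0]. destruct (Nat.eqb_spec 0 k); destruct (Nat.leb_spec k 0); subst; auto; lia.
  - cbn [sum_f_R0]. rewrite IH.
    destruct (Nat.eqb_spec (S m) k); destruct (Nat.leb_spec k m); destruct (Nat.leb_spec k (S m));
      subst; try lia; ring.
Qed.

Lemma sum_ind_sel (c : nat -> R) k m : (k <= m)%nat ->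
  sum_f_R0 (fun j => if Nat.eqb j k then c j else 0) m = c k.
Proof.
  intros H. rewrite sum_ind_gen. destruct (Nat.leb_spec k m); auto; lia.
Qed.

Lemma tp_cosk m k : (k <= m)%nat -> trig_poly m (fun t => cos (INR k * t)).
Proof.
  intros Hk. exists (fun j => if Nat.eqb j k then 1 else 0), (fun _ => 0).
  intros t. rewrite <- (sum_ind_sel (fun j => cos (INR j * t)) k m Hk).
  apply sum_eq. intros j _. destruct (Nat.eqb j k); ring.
Qed.

Lemma tp_sink m k : (k <= m)%nat -> trig_poly m (fun t => sin (INR k * t)).
Proof.
  intros Hk. exists (fun _ => 0), (fun j => if Nat.eqb j k then 1 else 0).
  intros t. rewrite <- (sum_ind_sel (fun j => sin (INR j * t)) k m Hk).
  apply sum_eq. intros j _. destruct (Nat.eqb j k); ring.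
Qed.

Lemma tp_const m c : trig_poly m (fun _ => c).
Proof.
  apply tp_ext with (fun t => c * cos (INR 0 * t)).
  - intros t. simpl. rewrite Rmult_0_l, cos_0. ring.
  - apply tp_scal, tp_cosk; lia.
Qed.

Lemma tp_sum m J (g : nat -> R -> R) : (forall j, (j <= J)%nat -> trig_poly m (g j)) ->
  trig_poly m (fun t => sum_f_R0 (fun j => g j t) J).
Proof.
  induction J as [|J IH]; intros H.
  - simpl. apply H; lia.
  - simpl. apply tp_add; [apply IH; intros; apply H; lia|apply H; lia].
Qed.

Lemma tp_mono m m' p : trig_poly m p -> (m <= m')%nat -> trig_poly m' p.
Proof.
  intros [a [b H]] Hm.
  exists (fun k => if Nat.leb k m then a k else 0), (fun k => if Nat.leb k m then b k else 0).
  intros t. rewrite H. induction Hm as [|m' Hm IH].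
  - apply sum_eq. intros i Hi. destruct (Nat.leb_spec i m); auto; lia.
  - cbn [sum_f_R0]. rewrite <- IH. destruct (Nat.leb_spec (S m') m); [lia|ring].
Qed.

Lemma INR_S_mul k t : INR (S k) * t = INR k * t + t.
Proof. rewrite S_INR; ring. Qed.

Lemma tp_cos_cos m k : (k <= m)%nat -> trig_poly (S m) (fun t => cos t * cos (INR k * t)).
Proof.
  intros Hk. destruct k as [|k].
  - apply tp_ext with (fun t => cos (INR 1 * t)); [intros; simpl; rewrite Rmult_0_l, cos_0, Rmult_1_l; ring|].
    apply tp_cosk; lia.
  - apply tp_ext with (fun t => /2 * cos (INR (S (S k)) * t) + /2 * cos (INR k * t)).
    + intros t. rewrite (INR_S_mul (S k)). rewrite cos_plus.
      replace (INR k * t) with (INR (S k) * t - t) by (rewrite S_INR; ring). rewrite cos_minus. field.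
    + apply tp_add; apply tp_scal; apply tp_cosk; lia.
Qed.

Lemma tp_cos_sin m k : (k <= m)%nat -> trig_poly (S m) (fun t => cos t * sin (INR k * t)).
Proof.
  intros Hk. destruct k as [|k].
  - apply tp_ext with (fun _ => 0); [intros; simpl; rewrite Rmult_0_l, sin_0; ring|]. apply tp_const.
  - apply tp_ext with (fun t => /2 * sin (INR (S (S k)) * t) + /2 * sin (INR k * t)).
    + intros t. rewrite (INR_S_mul (S k)). rewrite sin_plus.
      replace (INR k * t) with (INR (S k) * t - t) by (rewrite S_INR; ring). rewrite sin_minus. field.
    + apply tp_add; apply tp_scal; apply tp_sink; lia.
Qed.

Lemma tp_sin_cos m k : (k <= m)%nat -> trig_poly (S m) (fun t => sin t * cos (INR k * t)).
Proof.
  intros Hk. destruct k as [|k].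
  - apply tp_ext with (fun t => sin (INR 1 * t)); [intros; simpl; rewrite Rmult_0_l, cos_0, Rmult_1_l; ring|].
    apply tp_sink; lia.
  - apply tp_ext with (fun t => /2 * sin (INR (S (S k)) * t) + (- /2) * sin (INR k * t)).
    + intros t. rewrite (INR_S_mul (S k)). rewrite sin_plus.
      replace (INR k * t) with (INR (S k) * t - t) by (rewrite S_INR; ring). rewrite sin_minus. field.
    + apply tp_add; apply tp_scal; apply tp_sink; lia.
Qed.

Lemma tp_sin_sin m k : (k <= m)%nat -> trig_poly (S m) (fun t => sin t * sin (INR k * t)).
Proof.
  intros Hk. destruct k as [|k].
  - apply tp_ext with (fun _ => 0); [intros; simpl; rewrite Rmult_0_l, sin_0; ring|]. apply tp_const.
  - apply tp_ext with (fun t => (- /2) * cos (INR (S (S k)) * t) + /2 * cos (INR k * t)).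
    + intros t. rewrite (INR_S_mul (S k)). rewrite cos_plus.
      replace (INR k * t) with (INR (S k) * t - t) by (rewrite S_INR; ring). rewrite cos_minus. field.
    + apply tp_add; apply tp_scal; apply tp_cosk; lia.
Qed.

Lemma tp_mulcos m p : trig_poly m p -> trig_poly (S m) (fun t => cos t * p t).
Proof.
  intros [a [b H]].
  apply tp_ext with (fun t => sum_f_R0 (fun k => a k * (cos t * cos (INR k * t)) + b k * (cos t * sin (INR k * t))) m).
  - intros t. rewrite H. rewrite scal_sum. apply sum_eq. intros; ring.
  - apply tp_sum. intros j Hj. apply tp_add; apply tp_scal; [apply tp_cos_cos|apply tp_cos_sin]; auto.
Qed.

Lemma tp_mulsin m p : trig_poly m p -> trig_poly (S m) (fun t => sin t * p t).
Proof.
  intros [a [b H]].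
  apply tp_ext with (fun t => sum_f_R0 (fun k => a k * (sin t * cos (INR k * t)) + b k * (sin t * sin (INR k * t))) m).
  - intros t. rewrite H. rewrite scal_sum. apply sum_eq. intros; ring.
  - apply tp_sum. intros j Hj. apply tp_add; apply tp_scal; [apply tp_sin_cos|apply tp_sin_sin]; auto.
Qed.

Lemma tp_mul1 m A B C p : trig_poly m p ->
  trig_poly (S m) (fun t => (A + B * cos t + C * sin t) * p t).
Proof.
  intros H.
  apply tp_ext with (fun t => (A * p t + B * (cos t * p t)) + C * (sin t * p t)); [intros; ring|].
  apply tp_add; [apply tp_add|]; apply tp_scal.
  - apply tp_mono with m; auto.
  - apply tp_mulcos; auto.
  - apply tp_mulsin; auto.
Qed.

Lemma cont_pt_on a b g : (forall t, a <= t <= b -> continuity_pt g t) -> cont_on a b g.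
Proof.
  intros H t Ht eps He. specialize (H t Ht).
  unfold continuity_pt, continue_in, limit1_in, limit_in in H. simpl in H.
  destruct (H eps He) as [d [Hd Hd']]. exists d; split; auto.
  intros s Hs Hst. destruct (Req_dec s t) as [->|Hne].
  - rewrite Rminus_diag, Rabs_R0; auto.
  - apply (Hd' s). split; [unfold D_x, no_cond; split; auto|]. auto.
Qed.

Lemma cont_sum (g : nat -> R -> R) J t : (forall j, (j <= J)%nat -> continuity_pt (g j) t) ->
  continuity_pt (fun s => sum_f_R0 (fun j => g j s) J) t.
Proof.
  induction J as [|J IH]; intros H.
  - simpl. apply H; lia.
  - simpl. apply (continuity_pt_plus (fun s => sum_f_R0 (fun j => g j s) J) (g (S J))).
    + apply IH; intros; apply H; lia.
    + apply H; lia.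
Qed.

Lemma cont_prod (g : nat -> R -> R) J t : (forall j, (j <= J)%nat -> continuity_pt (g j) t) ->
  continuity_pt (fun s => prod_f_R0 (fun j => g j s) J) t.
Proof.
  induction J as [|J IH]; intros H.
  - simpl. apply H; lia.
  - simpl. apply (continuity_pt_mult (fun s => prod_f_R0 (fun j => g j s) J) (g (S J))).
    + apply IH; intros; apply H; lia.
    + apply H; lia.
Qed.

Lemma prod_ext (f g : nat -> R) K : (forall k, (k <= K)%nat -> f k = g k) -> prod_f_R0 f K = prod_f_R0 g K.
Proof.
  induction K as [|K IH]; intros H; simpl.
  - apply H; lia.
  - rewrite IH by (intros; apply H; lia). rewrite H by lia. auto.
Qed.

Lemma factR k z : Z.of_nat (fact k) = z -> INR (fact k) = IZR z.
Proof. intros <-. apply INR_IZR_INZ. Qed.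

Lemma PI_ub : PI < 315/100.
Proof.
  assert (Hc : cos (1575/1000) < 0).
  { destruct (pre_cos_bound (1575/1000) 1) as [_ H]; [lra|lra|].
    eapply Rle_lt_trans; [apply H|].
    unfold cos_approx, cos_term. cbn [sum_f_R0 Nat.mul Nat.add].
    rewrite (factR 0 1), (factR 2 2), (factR 4 24), (factR 6 720), (factR 8 40320) by (vm_compute; reflexivity).
    cbn [pow]. lra. }
  destruct (Rlt_le_dec (PI/2) (1575/1000)) as [H|H]; [lra|].
  assert (0 <= cos (1575/1000)). { apply cos_ge_0; pose proof PI_RGT_0; lra. } lra.
Qed.

Definition c0 : R := 634/1000.

Lemma jordan y : 0 <= y -> y <= PI / 2 -> c0 * y <= sin y.
Proof.
  intros H0 H1. pose proof PI_ub. pose proof PI_RGT_0.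
  destruct (SIN y) as [Hs _]; [lra|lra|].
  eapply Rle_trans; [|apply Hs].
  unfold sin_lb, sin_approx, sin_term. cbn [sum_f_R0 Nat.mul Nat.add].
  rewrite (factR 1 1), (factR 3 6), (factR 5 120), (factR 7 5040) by (vm_compute; reflexivity).
  cbn [pow]. unfold c0.
  set (z := y * y).
  assert (Hz0 : 0 <= z) by (unfold z; nra).
  assert (Hz1 : z <= 2480625/1000000) by (unfold z; nra).
  assert (Hp : 0 <= (1 - 634/1000) - z / 6 + z * z / 120 - z * z * z / 5040).
  { set (Z := 2480625/1000000).
    assert (HZ : 0 <= (1 - 634/1000) - Z / 6 + Z * Z / 120 - Z * Z * Z / 5040) by (unfold Z; lra).
    assert (E : ((1 - 634/1000) - z / 6 + z * z / 120 - z * z * z / 5040) -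
                ((1 - 634/1000) - Z / 6 + Z * Z / 120 - Z * Z * Z / 5040) =
                (Z - z) * (1/6 - (z + Z) / 120 + (z * z + z * Z + Z * Z) / 5040)) by (field).
    assert (0 <= (Z - z) * (1/6 - (z + Z) / 120 + (z * z + z * Z + Z * Z) / 5040)).
    { apply Rmult_le_pos; [unfold Z in *; lra|]. unfold Z in *. nra. }
    lra. }
  assert (E2 : y * (1 * / 1) + -1 * 1 * (y * (y * (y * 1)) / 6) +
    -1 * (-1 * 1) * (y * (y * (y * (y * (y * 1)))) / 120) +
    -1 * (-1 * (-1 * 1)) * (y * (y * (y * (y * (y * (y * (y * 1)))))) / 5040) - 634 / 1000 * y
    = y * ((1 - 634/1000) - z / 6 + z * z / 120 - z * z * z / 5040)) by (unfold z; field).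
  nra.
Qed.
Lemma div_le a b c d : 0 <= a -> a <= b -> 0 < c -> c <= d -> a / d <= b / c.
Proof.
  intros. unfold Rdiv. apply Rmult_le_compat; auto.
  - apply Rlt_le, Rinv_0_lt_compat; lra.
  - apply Rinv_le_contravar; auto.
Qed.

Lemma zeta3_aux K : (1 <= K)%nat ->
  sum_f_R0 (fun k => 1 / INR (S k) ^ 3) K <= 29/24 - 1 / (2 * (INR K + 1) * (INR K + 2)).
Proof.
  induction K as [|K IH]; intros HK; [lia|].
  destruct (Nat.eq_dec K 0) as [->|HK0].
  - simpl. lra.
  - rewrite tech5. specialize (IH ltac:(lia)).
    rewrite !S_INR in *.
    set (x := INR K) in *. assert (Hx : 0 <= x) by apply pos_INR.
    assert (E : 1 / (2 * (x + 1) * (x + 2)) - 1 / (2 * (x + 1 + 1) * (x + 1 + 2)) - 1 / (x + 1 + 1) ^ 3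
              = 1 / ((x + 1) * (x + 2) ^ 3 * (x + 3))).
    { field. repeat split; lra. }
    assert (0 < 1 / ((x + 1) * (x + 2) ^ 3 * (x + 3))).
    { apply Rdiv_lt_0_compat; [lra|]. apply Rmult_lt_0_compat; [apply Rmult_lt_0_compat|]; try lra.
      apply pow_lt; lra. }
    lra.
Qed.

Lemma zeta3 K : sum_f_R0 (fun k => 1 / INR (S k) ^ 3) K <= 29/24.
Proof.
  destruct K as [|K].
  - simpl. lra.
  - pose proof (zeta3_aux (S K) ltac:(lia)).
    assert (0 < 1 / (2 * (INR (S K) + 1) * (INR (S K) + 2))).
    { pose proof (pos_INR (S K)). apply Rdiv_lt_0_compat; [lra|].
      apply Rmult_lt_0_compat; [apply Rmult_lt_0_compat|]; lra. }
    lra.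
Qed.

Lemma zeta3' K : sum_f_R0 (fun k => 1 / INR (S (S k)) ^ 3) K <= 5/24.
Proof.
  pose proof (zeta3 (S K)). rewrite decomp_sum in H by lia. simpl pred in H.
  replace (1 / INR 1 ^ 3) with 1 in H by (simpl; field). lra.
Qed.

Definition Phi (e dl y : R) : R := if Rlt_dec dl y then (e / c0) ^ 4 / (dl * y ^ 3) else 0.

Lemma c0_pos : 0 < c0. Proof. unfold c0; lra. Qed.

Lemma E4_nonneg e : 0 <= e -> 0 <= (e / c0) ^ 4.
Proof. intros. apply pow_le. unfold Rdiv. apply Rmult_le_pos; [lra|apply Rlt_le, Rinv_0_lt_compat, c0_pos]. Qed.

Lemma Phi_nonneg e dl y : 0 <= e -> 0 < dl -> 0 <= Phi e dl y.
Proof.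
  intros He H. unfold Phi. destruct (Rlt_dec dl y); [|lra].
  apply Rmult_le_pos; [apply E4_nonneg; auto|].
  apply Rlt_le, Rinv_0_lt_compat, Rmult_lt_0_compat; [lra|apply pow_lt; lra].
Qed.

Lemma Phi_le e dl y z : 0 <= e -> 0 < dl -> 0 < z -> z <= y ->
  Phi e dl y <= (e / c0) ^ 4 / (dl * z ^ 3).
Proof.
  intros He Hd Hz Hzy. pose proof (E4_nonneg e He).
  assert (0 < dl * z ^ 3) by (apply Rmult_lt_0_compat; [lra|apply pow_lt; lra]).
  unfold Phi. destruct (Rlt_dec dl y).
  - apply div_le; auto; try lra. apply Rmult_le_compat_l; [lra|]. apply pow_incr; lra.
  - apply Rmult_le_pos; auto. apply Rlt_le, Rinv_0_lt_compat; auto.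
Qed.

Lemma key_sum e dl h K : 0 < dl -> 0 < h -> 1732 * h <= 2500 * dl -> 0 <= e -> e <= h / 2 ->
  sum_f_R0 (fun k => Phi e dl (INR (S k) * h - e)) K +
  sum_f_R0 (fun k => Phi e dl (INR (S k) * h + e)) K <= 1.
Proof.
  intros Hd Hh Hr He1 He2.
  set (E4 := (e / c0) ^ 4).
  assert (HE4 : 0 <= E4) by (apply E4_nonneg; auto).
  set (A0 := E4 / (dl * h ^ 3)).
  assert (Hdh : 0 < dl * h ^ 3) by (apply Rmult_lt_0_compat; [lra|apply pow_lt; lra]).
  assert (HA0 : 0 <= A0) by (unfold A0; apply Rmult_le_pos; auto; apply Rlt_le, Rinv_0_lt_compat; auto).
  assert (Hplus : sum_f_R0 (fun k => Phi e dl (INR (S k) * h + e)) K <= A0 * (29/24)).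
  { apply Rle_trans with (sum_f_R0 (fun k => 1 / INR (S k) ^ 3 * A0) K).
    - apply sum_Rle. intros k _. pose proof (pos_INR k). rewrite S_INR.
      eapply Rle_trans; [apply (Phi_le e dl _ ((INR k + 1) * h)); auto; nra|].
      right. unfold A0, E4. field. repeat split; try unfold c0; lra.
    - rewrite <- scal_sum. pose proof (zeta3 K). nra. }
  assert (Hminus : sum_f_R0 (fun k => Phi e dl (INR (S k) * h - e)) K <= Phi e dl (h - e) + A0 * (40/81)).
  { destruct K as [|K].
    - simpl. replace (1 * h - e) with (h - e) by ring. lra.
    - rewrite decomp_sum by lia. simpl pred. replace (INR 1 * h - e) with (h - e) by (simpl; ring).
      apply Rplus_le_compat_l.
      apply Rle_trans with (sum_f_R0 (fun k => 1 / INR (S (S k)) ^ 3 * (A0 * (64/27))) K).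
      + apply sum_Rle. intros k _. pose proof (pos_INR k). rewrite !S_INR.
        eapply Rle_trans; [apply (Phi_le e dl _ (3/4 * (INR k + 1 + 1) * h)); auto; nra|].
        right. unfold A0, E4. field. repeat split; try unfold c0; lra.
      + rewrite <- scal_sum. pose proof (zeta3' K). nra. }
  assert (Hc4 : c0 ^ 4 = 161568625936/1000000000000) by (unfold c0; field).
  assert (HE4' : E4 = e ^ 4 / c0 ^ 4) by (unfold E4; field; unfold c0; lra).
  assert (Hhd : h / dl <= 2500 / 1732).
  { apply (Rmult_le_reg_r dl); auto. unfold Rdiv. rewrite Rmult_assoc, Rinv_l by lra. lra. }
  assert (HA0e : A0 = e ^ 4 / h ^ 4 * (h / dl) / c0 ^ 4).
  { unfold A0. rewrite HE4'. field. repeat split; try unfold c0; lra. }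
  set (u := e / h) in *. set (rho := h / dl) in *.
  assert (Hu0 : 0 <= u) by (unfold u; apply Rmult_le_pos; [lra|apply Rlt_le, Rinv_0_lt_compat; lra]).
  assert (Hu1 : u <= 1/2).
  { unfold u. apply (Rmult_le_reg_r h); auto. unfold Rdiv. rewrite Rmult_assoc, Rinv_l by lra. lra. }
  assert (Hrho : 0 < rho) by (unfold rho; apply Rdiv_lt_0_compat; lra).
  assert (Hu4 : e ^ 4 / h ^ 4 = u ^ 4) by (unfold u; field; lra).
  rewrite Hu4 in HA0e.
  eapply Rle_trans; [apply Rplus_le_compat; [apply Hminus|apply Hplus]|].
  unfold Phi at 1. destruct (Rlt_dec dl (h - e)) as [Hc|Hc].
  - (* case 2: e < h - dl, so u < 1 - 1/rho <= 0.3072 *)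
    assert (Hu2 : u <= 3072/10000).
    { assert (e < h - dl) by lra.
      assert (1732 * h <= 2500 * dl) by lra.
      unfold u. apply (Rmult_le_reg_r h); auto. unfold Rdiv. rewrite Rmult_assoc, Rinv_l by lra. lra. }
    assert (Hhe : (h - e) = h * (1 - u)) by (unfold u; field; lra).
    assert (HPhi : E4 / (dl * (h - e) ^ 3) = u ^ 4 * rho / c0 ^ 4 / (1 - u) ^ 3).
    { rewrite HE4', Hhe. unfold u, rho. field. repeat split; try unfold c0; lra. }
    fold E4. rewrite HPhi.
    assert (Hu4b : u ^ 4 <= (3072/10000) ^ 4) by (apply pow_incr; lra).
    assert (H1u : (6928/10000) ^ 3 <= (1 - u) ^ 3) by (apply pow_incr; lra).
    assert (HA0b : A0 <= (3072/10000) ^ 4 * (2500/1732) / c0 ^ 4).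
    { rewrite HA0e. unfold Rdiv. apply Rmult_le_compat_r; [rewrite Hc4; lra|].
      apply Rmult_le_compat; auto; [apply pow_le; lra|lra]. }
    assert (HPb : u ^ 4 * rho / c0 ^ 4 / (1 - u) ^ 3 <= (3072/10000) ^ 4 * (2500/1732) / c0 ^ 4 / (6928/10000) ^ 3).
    { apply div_le.
      - unfold Rdiv. apply Rmult_le_pos; [apply Rmult_le_pos; [apply pow_le; lra|lra]|].
        rewrite Hc4. lra.
      - unfold Rdiv. apply Rmult_le_compat_r; [rewrite Hc4; lra|].
        apply Rmult_le_compat; auto; [apply pow_le; lra|lra].
      - apply pow_lt; lra.
      - auto. }
    rewrite Hc4 in *.
    assert (N1 : (3072/10000) ^ 4 * (2500/1732) / (161568625936 / 1000000000000) <= 8/100)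
      by (field_simplify; lra).
    assert (N2 : (3072/10000) ^ 4 * (2500/1732) / (161568625936 / 1000000000000) / (6928/10000) ^ 3 <= 24/100)
      by (field_simplify; lra).
    lra.
  - assert (HA0b : A0 <= (1/2) ^ 4 * (2500/1732) / c0 ^ 4).
    { rewrite HA0e. unfold Rdiv. apply Rmult_le_compat_r; [rewrite Hc4; lra|].
      apply Rmult_le_compat; [apply pow_le; lra|lra|apply pow_incr; lra|lra]. }
    rewrite Hc4 in *.
    assert (N1 : (1/2) ^ 4 * (2500/1732) / (161568625936 / 1000000000000) <= 5585/10000)
      by (field_simplify; lra).
    lra.
Qed.

Lemma sum_rot1 (H : nat -> R) M : (0 < M)%nat ->
  sum_f_R0 (fun k => H ((1 + k) mod M)%nat) (M - 1) = sum_f_R0 H (M - 1).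
Proof.
  intros HM. destruct M as [|M]; [lia|]. replace (S M - 1)%nat with M by lia.
  destruct M as [|M].
  - simpl. reflexivity.
  - rewrite (tech5 (fun k => H ((1 + k) mod S (S M))%nat) M).
    rewrite (decomp_sum H (S M)) by lia. simpl pred.
    replace ((1 + S M) mod S (S M))%nat with 0%nat by (replace (1 + S M)%nat with (S (S M)) by lia; rewrite Nat.mod_same by lia; auto).
    rewrite (sum_eq (fun k => H ((1 + k) mod S (S M))%nat) (fun i => H (S i))).
    + ring.
    + intros i Hi. f_equal. rewrite Nat.mod_small by lia. lia.
Qed.

Lemma sum_rot (G : nat -> R) M m : (0 < M)%nat ->
  sum_f_R0 (fun k => G ((m + k) mod M)%nat) (M - 1) = sum_f_R0 G (M - 1).
Proof.
  intros HM. induction m as [|m IH].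
  - apply sum_eq. intros i Hi. f_equal. rewrite Nat.add_0_l, Nat.mod_small; lia.
  - rewrite <- IH.
    rewrite <- (sum_rot1 (fun j => G ((m + j) mod M)%nat) M HM).
    apply sum_eq. intros i Hi. f_equal.
    rewrite Nat.add_mod_idemp_r by lia. f_equal. lia.
Qed.

Lemma prod_rot1 (H : nat -> R) M : (0 < M)%nat ->
  prod_f_R0 (fun k => H ((1 + k) mod M)%nat) (M - 1) = prod_f_R0 H (M - 1).
Proof.
  intros HM. destruct M as [|M]; [lia|]. replace (S M - 1)%nat with M by lia.
  destruct M as [|M].
  - simpl. reflexivity.
  - assert (D : forall (A : nat -> R) K, prod_f_R0 A (S K) = A 0%nat * prod_f_R0 (fun i => A (S i)) K).
    { intros A K. induction K as [|K IHK]; simpl in *; [ring|]. rewrite IHK. simpl. ring. }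
    rewrite (D H M).
    change (prod_f_R0 (fun k => H ((1 + k) mod S (S M))%nat) (S M)) with
      (prod_f_R0 (fun k => H ((1 + k) mod S (S M))%nat) M * H ((1 + S M) mod S (S M))%nat).
    replace ((1 + S M) mod S (S M))%nat with 0%nat by (replace (1 + S M)%nat with (S (S M)) by lia; rewrite Nat.mod_same by lia; auto).
    rewrite (prod_ext (fun k => H ((1 + k) mod S (S M))%nat) (fun i => H (S i))).
    + ring.
    + intros i Hi. f_equal. rewrite Nat.mod_small by lia. lia.
Qed.

Lemma prod_rot (G : nat -> R) M m : (0 < M)%nat ->
  prod_f_R0 (fun k => G ((m + k) mod M)%nat) (M - 1) = prod_f_R0 G (M - 1).
Proof.
  intros HM. induction m as [|m IH].
  - apply prod_ext. intros i Hi. f_equal. rewrite Nat.add_0_l, Nat.mod_small; lia.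
  - rewrite <- IH.
    rewrite <- (prod_rot1 (fun j => G ((m + j) mod M)%nat) M HM).
    apply prod_ext. intros i Hi. f_equal.
    rewrite Nat.add_mod_idemp_r by lia. f_equal. lia.
Qed.

Lemma sum_rev (g : nat -> R) K : sum_f_R0 (fun i => g (K - i)%nat) K = sum_f_R0 g K.
Proof.
  induction K as [|K IH].
  - simpl. auto.
  - rewrite decomp_sum by lia. simpl pred. rewrite Nat.sub_0_r.
    rewrite (sum_eq (fun i => g (S K - S i)%nat) (fun i => g (K - i)%nat)) by (intros; f_equal).
    rewrite IH. rewrite tech5. ring.
Qed.

Lemma prod_S (f : nat -> R) K : prod_f_R0 f (S K) = prod_f_R0 f K * f (S K).
Proof. reflexivity. Qed.

Lemma prod_excl (a : nat -> R) j K : (j <= K)%nat ->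
  prod_f_R0 (fun k => if Nat.eq_dec k j then 1 else a k) K * a j = prod_f_R0 a K.
Proof.
  induction K as [|K IH]; intros Hj.
  - assert (j = 0%nat) by lia. subst. simpl. ring.
  - rewrite !prod_S. destruct (Nat.eq_dec (S K) j) as [<-|Hne].
    + rewrite (prod_ext _ a K). { ring. }
      intros k Hk. destruct (Nat.eq_dec k (S K)); [lia|auto].
    + rewrite <- IH by lia. ring.
Qed.

Lemma prod_nonneg (a : nat -> R) K : (forall k, (k <= K)%nat -> 0 <= a k) -> 0 <= prod_f_R0 a K.
Proof.
  induction K as [|K IH]; intros H; simpl; [apply H; lia|].
  apply Rmult_le_pos; [apply IH; intros; apply H; lia|apply H; lia].
Qed.

Lemma prod_pos (a : nat -> R) K : (forall k, (k <= K)%nat -> 0 < a k) -> 0 < prod_f_R0 a K.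
Proof.
  induction K as [|K IH]; intros H; simpl; [apply H; lia|].
  apply Rmult_lt_0_compat; [apply IH; intros; apply H; lia|apply H; lia].
Qed.

Lemma sum_nonneg (a : nat -> R) K : (forall k, (k <= K)%nat -> 0 <= a k) -> 0 <= sum_f_R0 a K.
Proof.
  induction K as [|K IH]; intros H; simpl; [apply H; lia|].
  apply Rplus_le_le_0_compat; [apply IH; intros; apply H; lia|apply H; lia].
Qed.

Lemma sin2_shift x q : sin (x + PI * INR q) ^ 2 = sin x ^ 2.
Proof.
  induction q as [|q IH].
  - simpl. rewrite Rmult_0_r, Rplus_0_r. auto.
  - rewrite S_INR. replace (x + PI * (INR q + 1)) with ((x + PI * INR q) + PI) by ring.
    rewrite neg_sin. rewrite <- IH. ring.
Qed.

Lemma sin2_opp x : sin (- x) ^ 2 = sin x ^ 2.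
Proof. rewrite sin_neg. ring. Qed.

Lemma sin2_refl x : sin (PI - x) ^ 2 = sin x ^ 2.
Proof. rewrite sin_PI_x. auto. Qed.

Lemma sin_le_id x : 0 <= x -> x <= PI -> 0 <= sin x <= x.
Proof.
  intros H0 H1. split; [apply sin_ge_0; auto|].
  destruct (Req_dec x 0) as [->|Hne]; [rewrite sin_0; lra|]. left. apply sin_lt_x. lra.
Qed.

Lemma sqrt3_lb : 1732 / 1000 <= sqrt 3.
Proof.
  rewrite <- (sqrt_square (1732/1000)) by lra. apply sqrt_le_1_alt. lra.
Qed.

Definition Mn (n : nat) : nat := (n / 2 + 1)%nat.
Definition hh (n : nat) : R := 2 * PI / INR (Mn n).
Definition tn (n j : nat) : R := - PI + INR j * hh n.
Definition Sk (n k : nat) (t : R) : R := sin ((t - tn n k) / 2) ^ 2.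
Definition Wt (n j : nat) (t : R) : R :=
  prod_f_R0 (fun k => if Nat.eq_dec k j then 1 else Sk n k t ^ 2) (Mn n - 1).
Definition Qt (n : nat) (t : R) : R := sum_f_R0 (fun j => Wt n j t) (Mn n - 1).
Definition Pt (n : nat) (f : R -> R) (t : R) : R := sum_f_R0 (fun j => f (tn n j) * Wt n j t) (Mn n - 1).
Definition ratf (n : nat) (f : R -> R) (t : R) : R := Pt n f t / Qt n t.
Definition dlt (n : nat) : R := 2 * PI * sqrt 3 / (INR n + 2).

Lemma Mn_ge2 n : (2 <= n)%nat -> (2 <= Mn n)%nat.
Proof. intros. unfold Mn. pose proof (Nat.div_mod n 2 ltac:(lia)); pose proof (Nat.mod_upper_bound n 2 ltac:(lia)). lia. Qed.

Lemma Mn_deg n : (2 * (Mn n - 1) <= n)%nat.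
Proof. unfold Mn. pose proof (Nat.div_mod n 2 ltac:(lia)); pose proof (Nat.mod_upper_bound n 2 ltac:(lia)). lia. Qed.

Lemma Mn_ratio_nat n : (2 <= n)%nat -> (2 * (n + 2) <= 5 * Mn n)%nat.
Proof. intros. unfold Mn. pose proof (Nat.div_mod n 2 ltac:(lia)); pose proof (Nat.mod_upper_bound n 2 ltac:(lia)). lia. Qed.

Lemma INR_Mn_pos n : (2 <= n)%nat -> 0 < INR (Mn n).
Proof. intros. apply lt_0_INR. pose proof (Mn_ge2 n H). lia. Qed.

Lemma hh_pos n : (2 <= n)%nat -> 0 < hh n.
Proof. intros. unfold hh. apply Rdiv_lt_0_compat; [pose proof PI_pos; lra|apply INR_Mn_pos; auto]. Qed.

Lemma Mh n : (2 <= n)%nat -> INR (Mn n) * hh n = 2 * PI.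
Proof. intros. unfold hh. field. apply Rgt_not_eq, INR_Mn_pos; auto. Qed.

Lemma dlt_pos n : 0 < dlt n.
Proof.
  unfold dlt. apply Rdiv_lt_0_compat.
  - pose proof PI_pos. pose proof Rlt_sqrt3_0. nra.
  - pose proof (pos_INR n). lra.
Qed.

Lemma ratio n : (2 <= n)%nat -> 1732 * hh n <= 2500 * dlt n.
Proof.
  intros Hn. pose proof (INR_Mn_pos n Hn) as HM. pose proof (pos_INR n) as Hn0.
  pose proof sqrt3_lb. pose proof PI_pos.
  assert (Hnat : 2 * (INR n + 2) <= 5 * INR (Mn n)).
  { pose proof (Mn_ratio_nat n Hn) as HH. apply le_INR in HH. rewrite !mult_INR, plus_INR in HH. simpl in HH. lra. }
  unfold hh, dlt.
  replace (1732 * (2 * PI / INR (Mn n))) with ((2 * PI) * (1732 * (INR n + 2)) / (INR (Mn n) * (INR n + 2))) by (field; lra).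
  replace (2500 * (2 * PI * sqrt 3 / (INR n + 2))) with ((2 * PI) * (2500 * sqrt 3 * INR (Mn n)) / (INR (Mn n) * (INR n + 2))) by (field; lra).
  unfold Rdiv. apply Rmult_le_compat_r; [apply Rlt_le, Rinv_0_lt_compat; nra|].
  apply Rmult_le_compat_l; [lra|]. nra.
Qed.

Lemma tn_Ipi n j : (2 <= n)%nat -> (j < Mn n)%nat -> Ipi (tn n j).
Proof.
  intros Hn Hj. unfold tn, Ipi. pose proof (hh_pos n Hn). pose proof (Mh n Hn). pose proof (pos_INR j).
  assert (INR j + 1 <= INR (Mn n)) by (rewrite <- S_INR; apply le_INR; lia).
  split; nra.
Qed.

Lemma Sk_lin n k t : Sk n k t = / 2 + (- cos (tn n k) / 2) * cos t + (- sin (tn n k) / 2) * sin t.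
Proof.
  unfold Sk. set (y := (t - tn n k) / 2).
  assert (H : cos (2 * y) = 1 - 2 * sin y * sin y) by apply cos_2a_sin.
  replace (2 * y) with (t - tn n k) in H by (unfold y; field). rewrite cos_minus in H.
  simpl. lra.
Qed.

Lemma tp_mulS n k m p : trig_poly m p -> trig_poly (S (S m)) (fun t => Sk n k t ^ 2 * p t).
Proof.
  intros H.
  apply tp_ext with (fun t => (/ 2 + (- cos (tn n k) / 2) * cos t + (- sin (tn n k) / 2) * sin t) *
                              ((/ 2 + (- cos (tn n k) / 2) * cos t + (- sin (tn n k) / 2) * sin t) * p t)).
  - intros t. rewrite <- Sk_lin. ring.
  - apply tp_mul1. apply tp_mul1. auto.
Qed.

Lemma tp_prodA n K : trig_poly (2 * S K) (fun t => prod_f_R0 (fun k => Sk n k t ^ 2) K).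
Proof.
  induction K as [|K IH].
  - simpl. apply tp_ext with (fun t => Sk n 0 t ^ 2 * 1); [intros; ring|]. apply tp_mulS, tp_const.
  - replace (2 * S (S K))%nat with (S (S (2 * S K))) by lia.
    apply tp_ext with (fun t => Sk n (S K) t ^ 2 * prod_f_R0 (fun k => Sk n k t ^ 2) K).
    + intros; rewrite prod_S; ring.
    + apply tp_mulS; auto.
Qed.

Lemma tp_prodB n j K : (j <= K)%nat ->
  trig_poly (2 * K) (fun t => prod_f_R0 (fun k => if Nat.eq_dec k j then 1 else Sk n k t ^ 2) K).
Proof.
  induction K as [|K IH]; intros Hj.
  - assert (j = 0%nat) by lia. subst. simpl. apply tp_const.
  - destruct (Nat.eq_dec j (S K)) as [->|Hne].
    + apply tp_ext with (fun t => prod_f_R0 (fun k => Sk n k t ^ 2) K).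
      * intros t. rewrite prod_S. destruct (Nat.eq_dec (S K) (S K)); [|lia]. rewrite Rmult_1_r.
        apply prod_ext. intros k Hk. destruct (Nat.eq_dec k (S K)); [lia|auto].
      * apply tp_prodA.
    + replace (2 * S K)%nat with (S (S (2 * K))) by lia.
      apply tp_ext with (fun t => Sk n (S K) t ^ 2 *
                 prod_f_R0 (fun k => if Nat.eq_dec k j then 1 else Sk n k t ^ 2) K).
      * intros t. rewrite prod_S. destruct (Nat.eq_dec (S K) j); [lia|]. ring.
      * apply tp_mulS. apply IH. lia.
Qed.

Lemma tp_Wt n j : (j <= Mn n - 1)%nat -> trig_poly n (Wt n j).
Proof.
  intros Hj. apply tp_mono with (2 * (Mn n - 1))%nat; [|apply Mn_deg].
  unfold Wt. apply tp_prodB; auto.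
Qed.

Lemma tp_Qt n : trig_poly n (Qt n).
Proof. unfold Qt. apply tp_sum. intros j Hj. apply tp_Wt; auto. Qed.

Lemma tp_Pt n f : trig_poly n (Pt n f).
Proof. unfold Pt. apply tp_sum. intros j Hj. apply tp_scal, tp_Wt; auto. Qed.

Lemma cont_Wt n j t : continuity_pt (Wt n j) t.
Proof.
  unfold Wt. apply (cont_prod (fun k s => if Nat.eq_dec k j then 1 else Sk n k s ^ 2)).
  intros k _. destruct (Nat.eq_dec k j).
  - apply continuity_pt_const. intros a b; auto.
  - unfold Sk. reg.
Qed.

Lemma cont_Qt n t : continuity_pt (Qt n) t.
Proof. unfold Qt. apply (cont_sum (fun j s => Wt n j s)). intros; apply cont_Wt. Qed.

Lemma cont_Pt n f t : continuity_pt (Pt n f) t.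
Proof.
  unfold Pt. apply (cont_sum (fun j s => f (tn n j) * Wt n j s)). intros.
  apply (continuity_pt_mult (fun _ => f (tn n j)) (Wt n j)); [apply continuity_pt_const; intros a b; auto|apply cont_Wt].
Qed.

Lemma Sk_per n k : Sk n k (- PI) = Sk n k PI.
Proof.
  unfold Sk. replace ((PI - tn n k) / 2) with ((- PI - tn n k) / 2 + PI * INR 1) by (simpl; field).
  rewrite sin2_shift. auto.
Qed.

Lemma Wt_per n j : Wt n j (- PI) = Wt n j PI.
Proof.
  unfold Wt. apply prod_ext. intros k _. destruct (Nat.eq_dec k j); auto. rewrite Sk_per; auto.
Qed.

Lemma Qt_per n : Qt n (- PI) = Qt n PI.
Proof. unfold Qt. apply sum_eq. intros; apply Wt_per. Qed.

Lemma Pt_per n f : Pt n f (- PI) = Pt n f PI.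
Proof. unfold Pt. apply sum_eq. intros; rewrite Wt_per; auto. Qed.

Lemma near_node n t : (2 <= n)%nat -> Ipi t ->
  exists m0, (m0 <= Mn n)%nat /\ Rabs (t - (- PI + INR m0 * hh n)) <= hh n / 2.
Proof.
  intros Hn Ht. pose proof (hh_pos n Hn) as Hh. pose proof (Mh n Hn) as HM.
  set (h := hh n) in *. set (M := Mn n) in *.
  set (u := (t + PI) / h).
  assert (Hu0 : 0 <= u) by (unfold u, Ipi in *; apply Rmult_le_pos; [lra|apply Rlt_le, Rinv_0_lt_compat; lra]).
  assert (Hu1 : u <= INR M).
  { unfold u. apply (Rmult_le_reg_r h); auto. unfold Rdiv. rewrite Rmult_assoc, Rinv_l by lra. unfold Ipi in *. lra. }
  destruct (archimed (u - 1/2)) as [A1 A2].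
  set (z := up (u - 1/2)) in *.
  assert (Hz : (0 <= z)%Z).
  { assert (IZR (-1) < IZR z) by (simpl; lra). apply lt_IZR in H. lia. }
  exists (Z.to_nat z).
  assert (HI : INR (Z.to_nat z) = IZR z) by (rewrite INR_IZR_INZ, Z2Nat.id; auto).
  split.
  - destruct (le_lt_dec (Z.to_nat z) M) as [|Hlt]; auto. exfalso.
    apply le_INR in Hlt. rewrite S_INR, HI in Hlt. lra.
  - rewrite HI. replace (t - (- PI + IZR z * h)) with ((u - IZR z) * h) by (unfold u; field; lra).
    rewrite Rabs_mult, (Rabs_right h) by lra.
    assert (Rabs (u - IZR z) <= 1/2) by (unfold Rabs; destruct Rcase_abs; lra).
    nra.
Qed.

Lemma node_diff n m0 k : (2 <= n)%nat -> (m0 <= Mn n)%nat -> (k < Mn n)%nat ->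
  exists q, (q <= 1)%nat /\
    tn n ((m0 + k) mod Mn n) = - PI + INR m0 * hh n + INR k * hh n - 2 * PI * INR q.
Proof.
  intros Hn Hm Hk. pose proof (Mn_ge2 n Hn). set (M := Mn n) in *.
  exists ((m0 + k) / M)%nat. split.
  - assert ((m0 + k) / M < 2)%nat by (apply Nat.Div0.div_lt_upper_bound; lia). lia.
  - pose proof (Nat.div_mod (m0 + k) M ltac:(lia)) as E.
    set (q := ((m0 + k) / M)%nat) in *. set (r := ((m0 + k) mod M)%nat) in *.
    apply (f_equal INR) in E. rewrite plus_INR, plus_INR, mult_INR in E.
    unfold tn. rewrite <- (Mh n Hn). fold M.
    assert (INR r = INR m0 + INR k - INR M * INR q) by lra. rewrite H0. ring.
Qed.

Lemma node_distinct M m0 k : (0 < k < M)%nat -> ((m0 + k) mod M <> (m0 + 0) mod M)%nat.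
Proof.
  intros Hk Heq. rewrite Nat.add_0_r in Heq.
  rewrite Nat.Div0.add_mod in Heq.
  set (r := (m0 mod M)%nat) in *. assert (r < M)%nat by (apply Nat.mod_upper_bound; lia).
  rewrite (Nat.mod_small k M) in Heq by lia.
  pose proof (Nat.div_mod (r + k) M ltac:(lia)) as E.
  assert ((r + k) / M < 2)%nat by (apply Nat.Div0.div_lt_upper_bound; lia).
  destruct ((r + k) / M)%nat as [|[|q]] eqn:Eq; try lia.
  all: rewrite Heq in E; lia.
Qed.

Lemma sum_lin (a b : nat -> R) c1 c2 c3 K :
  sum_f_R0 (fun i => c1 * (c2 * a i + c3 * b i)) K = c1 * (c2 * sum_f_R0 a K + c3 * sum_f_R0 b K).
Proof. induction K as [|K IH]; simpl; [ring|]. rewrite IH. ring. Qed.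

Section JP.
Variables (f : R -> R) (n : nat) (t : R) (m0 : nat).
Hypothesis Hf : C2pi f.
Hypothesis Hn : (2 <= n)%nat.
Hypothesis Ht : Ipi t.
Hypothesis Hm0 : (m0 <= Mn n)%nat.
Hypothesis Hnear : Rabs (t - (- PI + INR m0 * hh n)) <= hh n / 2.

Let M := Mn n.
Let h := hh n.
Let tau := t - (- PI + INR m0 * h).
Let e := Rabs tau.
Let dl := dlt n.
Let w := modcont f dl.
Let J (k : nat) : nat := ((m0 + k) mod M)%nat.

Lemma M2 : (2 <= M)%nat. Proof. apply Mn_ge2; auto. Qed.
Lemma hpos : 0 < h. Proof. apply hh_pos; auto. Qed.
Lemma HMh : INR M * h = 2 * PI. Proof. apply Mh; auto. Qed.
Lemma tau_le : Rabs tau <= h / 2. Proof. apply Hnear. Qed.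

Lemma J_lt k : (J k < M)%nat.
Proof. unfold J. apply Nat.mod_upper_bound. pose proof M2. lia. Qed.

Lemma diff_J k : (k < M)%nat -> exists q, (q <= 1)%nat /\ t - tn n (J k) = tau - INR k * h + 2 * PI * INR q.
Proof.
  intros Hk. destruct (node_diff n m0 k Hn Hm0 Hk) as [q [Hq E]].
  exists q. split; auto. unfold J, tau, h, M. rewrite E. ring.
Qed.

Lemma Sk_J k : (k < M)%nat -> Sk n (J k) t = sin ((tau - INR k * h) / 2) ^ 2.
Proof.
  intros Hk. destruct (diff_J k Hk) as [q [_ E]]. unfold Sk. rewrite E.
  replace ((tau - INR k * h + 2 * PI * INR q) / 2) with ((tau - INR k * h) / 2 + PI * INR q) by field.
  apply sin2_shift.
Qed.

Lemma Sk_J0 : Sk n (J 0) t = sin (e / 2) ^ 2.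
Proof.
  rewrite Sk_J by (pose proof M2; lia). simpl INR. rewrite Rmult_0_l, Rminus_0_r.
  unfold e, Rabs. destruct (Rcase_abs tau); auto.
  replace (- tau / 2) with (- (tau / 2)) by field. rewrite sin2_opp. auto.
Qed.

Lemma X_bounds k : (1 <= k < M)%nat -> 0 < INR k * h - tau < 2 * PI /\ h / 2 <= INR k * h - tau.
Proof.
  intros Hk. pose proof hpos. pose proof HMh. pose proof tau_le.
  assert (1 <= INR k) by (replace 1 with (INR 1) by reflexivity; apply le_INR; lia).
  assert (INR k + 1 <= INR M) by (rewrite <- S_INR; apply le_INR; lia).
  assert (Rabs tau >= - tau /\ Rabs tau >= tau) by (unfold Rabs; destruct Rcase_abs; lra).
  split; [split|]; nra.
Qed.

Lemma Sk_J_pos k : (1 <= k < M)%nat -> 0 < Sk n (J k) t.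
Proof.
  intros Hk. rewrite Sk_J by lia. destruct (X_bounds k Hk) as [[H1 H2] _].
  replace ((tau - INR k * h) / 2) with (- ((INR k * h - tau) / 2)) by field. rewrite sin2_opp.
  apply pow_lt. apply sin_gt_0; lra.
Qed.

Lemma Wt_nonneg j : 0 <= Wt n j t.
Proof.
  unfold Wt. apply prod_nonneg. intros k _. destruct (Nat.eq_dec k j); [lra|]. apply pow2_ge_0.
Qed.

Lemma W0_pos : 0 < Wt n (J 0) t.
Proof.
  pose proof M2. unfold Wt. fold M.
  rewrite <- (prod_rot _ M m0) by lia.
  apply prod_pos. intros k Hk. fold (J k). destruct (Nat.eq_dec (J k) (J 0)) as [E|Hne]; [lra|].
  destruct (Nat.eq_dec k 0) as [->|Hk0]; [contradiction|].
  apply pow_lt. apply Sk_J_pos. lia.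
Qed.

Lemma Qt_rot : Qt n t = sum_f_R0 (fun k => Wt n (J k) t) (M - 1).
Proof. unfold Qt. fold M. symmetry. unfold J. apply (sum_rot (fun j => Wt n j t) M m0). pose proof M2; lia. Qed.

Lemma Qt_pos : 0 < Qt n t /\ Wt n (J 0) t <= Qt n t.
Proof.
  pose proof M2. rewrite Qt_rot. rewrite decomp_sum by lia.
  assert (0 <= sum_f_R0 (fun i => Wt n (J (S i)) t) (pred (M - 1))) by (apply sum_nonneg; intros; apply Wt_nonneg).
  pose proof W0_pos. split; lra.
Qed.

Lemma W_rel k : (k < M)%nat -> Wt n (J k) t * Sk n (J k) t ^ 2 = Wt n (J 0) t * Sk n (J 0) t ^ 2.
Proof.
  intros Hk. unfold Wt. fold M.
  rewrite (prod_excl (fun i => Sk n i t ^ 2) (J k) (M - 1)) by (pose proof (J_lt k); lia).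
  rewrite (prod_excl (fun i => Sk n i t ^ 2) (J 0) (M - 1)) by (pose proof (J_lt 0); lia).
  auto.
Qed.

Lemma dist_J k : (1 <= k < M)%nat ->
  Rmin (Rabs (t - tn n (J k))) (2 * PI - Rabs (t - tn n (J k))) =
  Rmin (INR k * h - tau) (2 * PI - (INR k * h - tau)).
Proof.
  intros Hk. destruct (X_bounds k Hk) as [[H1 H2] _].
  destruct (diff_J k ltac:(lia)) as [q [Hq E]]. rewrite E.
  destruct q as [|[|q]]; try lia.
  - simpl INR. rewrite Rmult_0_r, Rplus_0_r. rewrite Rabs_left by lra.
    replace (- (tau - INR k * h)) with (INR k * h - tau) by ring. auto.
  - simpl INR. rewrite Rabs_right by lra. rewrite Rmin_comm. f_equal; ring.
Qed.

Definition psi (d : R) : R := if Rlt_dec dl d then d / dl else 0.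

Lemma psi_nonneg d : 0 <= d -> 0 <= psi d.
Proof.
  intros. unfold psi. destruct Rlt_dec; [|lra]. apply Rmult_le_pos; [lra|apply Rlt_le, Rinv_0_lt_compat; unfold dl; apply dlt_pos].
Qed.

Lemma psi_ratio d : 0 < d -> d <= PI -> psi d * (sin (e / 2) ^ 4 / sin (d / 2) ^ 4) <= Phi e dl d.
Proof.
  intros Hd0 Hd1. pose proof PI_pos. pose proof (dlt_pos n) as Hdl. fold dl in Hdl.
  assert (He0 : 0 <= e) by apply Rabs_pos.
  assert (He1 : e <= PI).
  { pose proof tau_le. pose proof HMh. pose proof hpos.
    assert (2 <= INR M) by (replace 2 with (INR 2) by reflexivity; apply le_INR; apply M2). unfold e. nra. }
  destruct (sin_le_id (e / 2)) as [Hs0 Hs1]; [lra|lra|].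
  pose proof (jordan (d / 2) ltac:(lra) ltac:(lra)) as Hj.
  assert (Hsd : 0 < c0 * (d / 2)) by (apply Rmult_lt_0_compat; [apply c0_pos|lra]).
  unfold psi, Phi. destruct (Rlt_dec dl d) as [Hlt|Hge].
  - assert (Hn4 : sin (e / 2) ^ 4 <= (e / 2) ^ 4) by (apply pow_incr; lra).
    assert (Hd4 : (c0 * (d / 2)) ^ 4 <= sin (d / 2) ^ 4) by (apply pow_incr; lra).
    assert (Hpd : 0 < (c0 * (d / 2)) ^ 4) by (apply pow_lt; lra).
    apply Rle_trans with (d / dl * ((e / 2) ^ 4 / (c0 * (d / 2)) ^ 4)).
    + apply Rmult_le_compat_l; [apply Rmult_le_pos; [lra|apply Rlt_le, Rinv_0_lt_compat; lra]|].
      apply div_le; auto. apply pow_le; lra.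
    + right. pose proof c0_pos. field. repeat split; lra.
  - rewrite Rmult_0_l. lra.
Qed.

Lemma Phi_min a b : 0 < dl -> 0 <= e -> Phi e dl (Rmin a b) <= Phi e dl a + Phi e dl b.
Proof.
  intros. pose proof (Phi_nonneg e dl a H0 H). pose proof (Phi_nonneg e dl b H0 H).
  unfold Rmin. destruct (Rle_dec a b); lra.
Qed.

Lemma fb : bnd f. Proof. destruct Hf as [H _]. apply cont_bnd; auto. Qed.
Lemma fper : f (- PI) = f PI. Proof. destruct Hf as [_ H]. auto. Qed.
Lemma dlpos : 0 < dl. Proof. apply dlt_pos. Qed.
Lemma h2dl : h / 2 <= dl.
Proof. pose proof (ratio n Hn). pose proof hpos. fold h dl in H. lra. Qed.

Lemma term0 : Rabs (f t - f (tn n (J 0))) <= w.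
Proof.
  pose proof M2. pose proof tau_le. pose proof h2dl. pose proof HMh.
  destruct (le_lt_eq_dec m0 M Hm0) as [Hlt|Heq].
  - assert (E : J 0 = m0) by (unfold J; rewrite Nat.add_0_r, Nat.mod_small; auto).
    rewrite E. apply mc1; auto. apply fb. apply tn_Ipi; auto.
    unfold tn. fold h. fold tau. lra.
  - assert (E : J 0 = 0%nat) by (unfold J; rewrite Nat.add_0_r, Heq, Nat.mod_same; auto; lia).
    rewrite E. unfold tn. rewrite Rmult_0_l, Rplus_0_r, fper.
    apply mc1; auto. apply fb. unfold Ipi; pose proof PI_pos; lra.
    assert (Et : t - PI = tau) by (unfold tau; rewrite Heq; lra). rewrite Et. lra.
Qed.

Lemma termk k : (1 <= k < M)%nat ->
  Rabs (f t - f (tn n (J k))) * Wt n (J k) t <=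
  w * (2 * Wt n (J k) t + Wt n (J 0) t * (Phi e dl (INR k * h - tau) + Phi e dl (2 * PI - (INR k * h - tau)))).
Proof.
  intros Hk. pose proof (J_lt k) as HJ. set (s := tn n (J k)).
  assert (Hs : Ipi s) by (apply tn_Ipi; auto).
  pose proof dlpos. pose proof (modcont_nonneg f dl ltac:(lra)) as Hw. fold w in Hw.
  destruct (mc_per f dl fb dlpos fper s t Hs Ht) as [P1 P2]. fold w in P1, P2.
  pose proof (dist_J k Hk) as DJ. fold s in DJ. rewrite DJ in P1, P2.
  set (X := INR k * h - tau) in *.
  destruct (X_bounds k Hk) as [[HX1 HX2] _]. fold X in HX1, HX2.
  set (d := Rmin X (2 * PI - X)) in *.
  assert (Hd0 : 0 < d) by (unfold d, Rmin; destruct Rle_dec; lra).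
  assert (Hd1 : d <= PI) by (unfold d, Rmin; destruct Rle_dec; lra).
  assert (Hf1 : Rabs (f t - f s) <= (2 + psi d) * w).
  { unfold psi. destruct (Rlt_dec dl d); [auto|]. rewrite Rplus_0_r. apply P2. lra. }
  pose proof (Wt_nonneg (J k)) as HWk. pose proof (Wt_nonneg (J 0)) as HW0.
  assert (HSk : 0 < Sk n (J k) t) by (apply Sk_J_pos; auto).
  assert (ESk : Sk n (J k) t = sin (d / 2) ^ 2).
  { rewrite Sk_J by lia. replace ((tau - INR k * h) / 2) with (- (X / 2)) by (unfold X; field).
    rewrite sin2_opp. unfold d, Rmin. destruct Rle_dec; auto.
    replace ((2 * PI - X) / 2) with (PI - X / 2) by field. rewrite sin2_refl. auto. }
  assert (HW : Wt n (J k) t = Wt n (J 0) t * (sin (e / 2) ^ 4 / sin (d / 2) ^ 4)).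
  { pose proof (W_rel k ltac:(lia)) as R. rewrite Sk_J0, ESk in R. rewrite ESk in HSk.
    assert (0 < sin (d / 2) ^ 4) by (replace (sin (d / 2) ^ 4) with ((sin (d / 2) ^ 2) ^ 2) by ring; apply pow_lt; auto).
    apply (Rmult_eq_reg_r (sin (d / 2) ^ 4)); [|lra].
    replace (sin (e / 2) ^ 4) with ((sin (e / 2) ^ 2) ^ 2) by ring.
    replace (sin (d / 2) ^ 4) with ((sin (d / 2) ^ 2) ^ 2) in * by ring.
    assert (Hsd : sin (d / 2) <> 0) by (intro Z; rewrite Z in HSk; simpl in HSk; lra).
    rewrite R. field. auto. }
  assert (Hpsi : psi d * Wt n (J k) t <= Wt n (J 0) t * (Phi e dl X + Phi e dl (2 * PI - X))).
  { rewrite HW. rewrite <- Rmult_assoc, (Rmult_comm (psi d)), Rmult_assoc.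
    apply Rmult_le_compat_l; auto.
    eapply Rle_trans; [apply psi_ratio; auto|].
    apply Phi_min; auto. apply Rabs_pos. }
  pose proof (psi_nonneg d ltac:(lra)).
  apply Rle_trans with ((2 + psi d) * w * Wt n (J k) t).
  - apply Rmult_le_compat_r; auto.
  - nra.
Qed.

Lemma sumPhi : sum_f_R0 (fun i => Phi e dl (INR (S i) * h - tau) + Phi e dl (2 * PI - (INR (S i) * h - tau))) (M - 2) <= 1.
Proof.
  pose proof M2. pose proof HMh. pose proof hpos. pose proof dlpos. pose proof tau_le.
  rewrite sum_plus.
  assert (Erev : sum_f_R0 (fun i => Phi e dl (2 * PI - (INR (S i) * h - tau))) (M - 2) =
                 sum_f_R0 (fun j => Phi e dl (INR (S j) * h + tau)) (M - 2)).
  { rewrite <- (sum_rev (fun j => Phi e dl (INR (S j) * h + tau)) (M - 2)).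
    apply sum_eq. intros i Hi. cbv beta. f_equal. rewrite !S_INR. rewrite minus_INR by lia. rewrite minus_INR by lia.
    replace (INR 2) with 2 by (simpl; ring). rewrite <- HMh. ring. }
  rewrite Erev.
  pose proof (ratio n Hn) as Hr. fold h dl in Hr.
  unfold e, Rabs. destruct (Rcase_abs tau) as [Hneg|Hpos].
  - rewrite (sum_eq (fun i => Phi (- tau) dl (INR (S i) * h - tau)) (fun i => Phi (- tau) dl (INR (S i) * h + - tau)))
      by (intros; f_equal; ring).
    rewrite (sum_eq (fun j => Phi (- tau) dl (INR (S j) * h + tau)) (fun i => Phi (- tau) dl (INR (S i) * h - - tau)))
      by (intros; f_equal; ring).
    rewrite Rplus_comm. apply key_sum; auto; try lra.
    unfold Rabs in H3; destruct Rcase_abs in H3; lra.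
  - apply key_sum; auto; try lra. unfold Rabs in H3; destruct Rcase_abs in H3; lra.
Qed.

Lemma jack_point : 0 < Qt n t /\ Rabs (f t - ratf n f t) <= 2 * w.
Proof.
  pose proof M2 as HM2. destruct Qt_pos as [HQ HQ0]. split; auto.
  pose proof dlpos. pose proof (modcont_nonneg f dl ltac:(lra)) as Hw. fold w in Hw.
  set (T := fun k => Rabs (f t - f (tn n (J k))) * Wt n (J k) t).
  assert (E1 : f t - ratf n f t = sum_f_R0 (fun j => (f t - f (tn n j)) * Wt n j t) (M - 1) / Qt n t).
  { unfold ratf. replace (f t - Pt n f t / Qt n t) with ((f t * Qt n t - Pt n f t) / Qt n t) by (field; lra).
    f_equal. unfold Pt, Qt. fold M. rewrite scal_sum. rewrite <- minus_sum. apply sum_eq; intros; ring. }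
  rewrite E1. unfold Rdiv. rewrite Rabs_mult, (Rabs_right (/ Qt n t)) by (apply Rle_ge, Rlt_le, Rinv_0_lt_compat; auto).
  apply (Rmult_le_reg_r (Qt n t)); auto. rewrite Rmult_assoc, Rinv_l, Rmult_1_r by lra.
  eapply Rle_trans; [apply sum_f_R0_triangle|].
  rewrite (sum_eq (fun i => Rabs ((f t - f (tn n i)) * Wt n i t)) (fun j => Rabs (f t - f (tn n j)) * Wt n j t))
    by (intros; rewrite Rabs_mult, (Rabs_right (Wt n i t)); auto; apply Rle_ge, Wt_nonneg).
  rewrite <- (sum_rot (fun j => Rabs (f t - f (tn n j)) * Wt n j t) M m0) by lia.
  fold (J 0). change (sum_f_R0 (fun k => Rabs (f t - f (tn n ((m0 + k) mod M))) * Wt n ((m0 + k) mod M) t) (M - 1))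
    with (sum_f_R0 T (M - 1)).
  rewrite decomp_sum by lia.
  replace (pred (M - 1)) with (M - 2)%nat by lia.
  assert (HT0 : T 0%nat <= w * Wt n (J 0) t).
  { unfold T. rewrite Rmult_comm, (Rmult_comm w). apply Rmult_le_compat_l; [apply Wt_nonneg|apply term0]. }
  assert (HTk : sum_f_R0 (fun i => T (S i)) (M - 2) <=
     sum_f_R0 (fun i => w * (2 * Wt n (J (S i)) t + Wt n (J 0) t *
        (Phi e dl (INR (S i) * h - tau) + Phi e dl (2 * PI - (INR (S i) * h - tau))))) (M - 2)).
  { apply sum_Rle. intros i Hi. unfold T. apply termk. lia. }
  assert (HQs : Qt n t = Wt n (J 0) t + sum_f_R0 (fun i => Wt n (J (S i)) t) (M - 2)).
  { rewrite Qt_rot. rewrite decomp_sum by lia. replace (pred (M - 1)) with (M - 2)%nat by lia. auto. }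
  rewrite (sum_lin (fun i => Wt n (J (S i)) t)
     (fun i => Phi e dl (INR (S i) * h - tau) + Phi e dl (2 * PI - (INR (S i) * h - tau)))) in HTk.
  pose proof sumPhi as HS.
  pose proof (Wt_nonneg (J 0)) as HW0.
  assert (Wt n (J 0) t * sum_f_R0 (fun i => Phi e dl (INR (S i) * h - tau) + Phi e dl (2 * PI - (INR (S i) * h - tau))) (M - 2) <= Wt n (J 0) t) by nra.
  nra.
Qed.

End JP.

Theorem jackson f n : C2pi f -> (2 <= n)%nat ->
  exists r, trig_rat n n r /\ C2pi r /\
    forall t, Ipi t -> Rabs (f t - r t) <= 2 * modcont f (dlt n).
Proof.
  intros Hf Hn.
  assert (HQ : forall t, Ipi t -> 0 < Qt n t /\ Rabs (f t - ratf n f t) <= 2 * modcont f (dlt n)).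
  { intros t Ht. destruct (near_node n t Hn Ht) as [m0 [Hm0 Hnear]].
    apply (jack_point f n t m0 Hf Hn Ht Hm0 Hnear). }
  exists (ratf n f). split; [|split].
  - exists (Pt n f), (Qt n). split; [apply tp_Pt|]. split; [apply tp_Qt|]. split.
    + intros t Ht. apply (HQ t Ht).
    + intros t. reflexivity.
  - split.
    + apply cont_pt_on. intros t Ht. unfold ratf.
      apply (continuity_pt_div (Pt n f) (Qt n)); [apply cont_Pt|apply cont_Qt|].
      apply Rgt_not_eq, (HQ t Ht).
    + unfold ratf. rewrite Pt_per, Qt_per. auto.
  - intros t Ht. apply (HQ t Ht).
Qed.

Lemma E_alpha_le N x alpha L n f r g : trig_rat n n r -> is_FIF N x alpha r (L r) g ->
  E_alpha N x alpha L n n f <= supnorm (fun t => f t - g t).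
Proof.
  intros Hr Hg. unfold E_alpha, inf_R.
  set (s := supnorm (fun t => f t - g t)).
  assert (- s <= sup_R (fun y => exists r g, trig_rat n n r /\ is_FIF N x alpha r (L r) g /\
                                         - y = supnorm (fun t => f t - g t))).
  { apply sup_R_ub.
    - exists r, g. split; auto. split; auto. unfold s. ring.
    - exists 0. intros y [r' [g' [_ [_ Hy]]]]. pose proof (supnorm_nonneg (fun t => f t - g' t)). lra. }
  lra.
Qed.

Theorem mainTheorem7 (N : nat) (x : nat -> R) (alpha : nat -> R)
  (L : (R -> R) -> (R -> R)) (f : R -> R) (n : nat) :
  partition N x ->
  (forall i, (1 <= i <= N)%nat -> -1 < alpha i < 1) ->
  admissible_L N x L ->
  C2pi f ->
  (2 <= n)%nat ->
  E_alpha N x alpha L n n f <=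
    (1 + alpha_norm alpha N * (norm_IdmL L - 1)) / (1 - alpha_norm alpha N)
      * 2 * modcont f (2 * PI * sqrt 3 / (INR n + 2))
    + alpha_norm alpha N / (1 - alpha_norm alpha N) * norm_IdmL L * supnorm f.
Proof.
  intros Hp Ha HL Hf Hn.
  destruct (jackson f n Hf Hn) as [r [Htr [Hr Hjr]]].
  pose proof HL as HL'. destruct HL' as [HC [_ [_ [_ Hend]]]].
  destruct (Hend r Hr) as [E0 E1]. rewrite (part_x0 N x Hp) in E0. rewrite (part_xN N x Hp) in E1.
  pose proof (HC r Hr) as HLr.
  destruct (FIF_exists N x alpha r (L r) Hp Ha (proj1 Hr) (proj1 HLr) E0 E1) as [g Hg].
  eapply Rle_trans; [apply (E_alpha_le N x alpha L n f r g Htr Hg)|].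
  destruct (alpha_norm_spec alpha N Ha) as [[Ha0 Ha1] _].
  set (a := alpha_norm alpha N) in *.
  set (K := norm_IdmL L).
  assert (HK : 0 <= K) by (apply (normL_nonneg N x L HL)).
  set (w := modcont f (2 * PI * sqrt 3 / (INR n + 2))).
  fold (dlt n) in Hjr. change (modcont f (dlt n)) with w in Hjr.
  assert (Hw : 0 <= w) by (apply modcont_nonneg; left; apply dlt_pos).
  set (F := supnorm f).
  assert (Hfb : bnd f) by (apply C2pi_bnd; auto).
  set (V := supnorm (fun s => r s - L r s)).
  assert (HVb : bnd (fun s => r s - L r s)) by (apply bnd_sub; apply C2pi_bnd; auto).
  assert (HV : forall s, Ipi s -> Rabs (r s - L r s) <= V) by (intros; apply (supnorm_ge _ s HVb); auto).
  assert (Hgr := FIF_bound N x alpha r (L r) g V Hp Ha (proj1 Hr) HV Hg). fold a in Hgr.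
  assert (Hrn : supnorm r <= F + 2 * w).
  { apply supnorm_le. intros t Ht. pose proof (Hjr t Ht). pose proof (supnorm_ge f t Hfb Ht). fold F in H0.
    replace (r t) with (f t - (f t - r t)) by ring. eapply Rle_trans; [apply Rabs_triang|].
    rewrite Rabs_Ropp. lra. }
  assert (HVK : V <= K * (F + 2 * w)).
  { eapply Rle_trans; [apply (opnorm_bound N x L r HL Hr)|]. fold K. apply Rmult_le_compat_l; auto. }
  assert (Hc : 0 <= a / (1 - a)) by (apply Rmult_le_pos; [lra|apply Rlt_le, Rinv_0_lt_compat; lra]).
  apply supnorm_le. intros t Ht.
  replace (f t - g t) with ((f t - r t) - (g t - r t)) by ring.
  eapply Rle_trans; [apply Rabs_triang|]. rewrite Rabs_Ropp.
  pose proof (Hjr t Ht). pose proof (Hgr t Ht).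
  assert (a / (1 - a) * V <= a / (1 - a) * (K * (F + 2 * w))) by (apply Rmult_le_compat_l; auto).
  assert (Eq : (1 + a * (K - 1)) / (1 - a) * 2 * w + a / (1 - a) * K * F =
               2 * w + a / (1 - a) * (K * (F + 2 * w))) by (field; lra).
  fold K. rewrite Eq. lra.
Qed.
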